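(* Let $k=0$ and $f_r(x)=x^2\exp(r-x)$. For every $r\in[2.6,2.9]$, \[ f_r^2(2)<f_r^3(2)<2<f_r(2), \] and, in consequence, $f_r$ (as a self-map of the compact interval $[f_r^2(2),f_r(2)]$) is chaotic in the sense of Li and Yorke, in the sense of Block and Coppel, and in the sense of Devaney.
   Context: Let $X$ be a compact metric space and $f\colon X\to X$ continuous. (Li–Yorke) $f$ is L/Y-chaotic if there is an uncountable $S\subset X$ such that for all $x\neq y$ in $S$: $\limsup_n d(f^n x,f^n y)>0$ and $\liminf_n d(f^n x,f^n y)=0$, and for all $x\in S$ and all periodic $p\in X$: $\limsup_n d(f^n x,f^n p)>0$. (Block–Coppel) $f$ is B/C-chaotic if there are $m\in\mathbb{N}$, a compact $f^m$-invariant $Y\subset X$ and a continuous surjection $h\colon Y\to\Sigma$ with $h\circ f^m=\sigma\circ h$ on $Y$, where $\Sigma=\{0,1\}^{\mathbb{N}}$ with metric $d(\alpha,\beta)=\sum_{i\ge0}|a_i-b_i|/2^i$ and $\sigma$ is the left shift. (Devaney) $f$ is D-chaotic if there is a compact invariant $Y\subset X$ such that $f|_Y$ is topologically transitive, periodic points of $f|_Y$ are dense in $Y$, and $f|_Y$ has sensitive dependence on initial conditions. *)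

(* Defs.v *)
From Stdlib Require Import Reals.
From Coquelicot Require Import Coquelicot.
Open Scope R_scope.

Definition fr (r x : R) : R := x ^ 2 * exp (r - x).

Definition iter (f : R -> R) (n : nat) (x : R) : R := Nat.iter n f x.

Definition uncountable (S : R -> Prop) : Prop :=
  ~ exists g : R -> nat, forall x y, S x -> S y -> g x = g y -> x = y.

Definition periodic_pt (f : R -> R) (p : R) : Prop :=
  exists m : nat, (1 <= m)%nat /\ iter f m p = p.

Definition LY_chaotic (f : R -> R) (X : R -> Prop) : Prop :=
  exists S : R -> Prop,
    (forall x, S x -> X x) /\ uncountable S /\
    (forall x y, S x -> S y -> x <> y ->
        Rbar_lt 0 (LimSup_seq (fun n => Rabs (iter f n x - iter f n y))) /\
        LimInf_seq (fun n => Rabs (iter f n x - iter f n y)) = Finite 0) /\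
    (forall x p, S x -> X p -> periodic_pt f p ->
        Rbar_lt 0 (LimSup_seq (fun n => Rabs (iter f n x - iter f n p)))).

Definition Sigma := nat -> bool.
Definition bitdiff (a b : bool) : R := if Bool.eqb a b then 0 else 1.
Definition dSigma (a b : Sigma) : R :=
  Series (fun i => bitdiff (a i) (b i) / 2 ^ i).
Definition shift (a : Sigma) : Sigma := fun i => a (S i).

Definition BC_chaotic (f : R -> R) (X : R -> Prop) : Prop :=
  exists (m : nat) (Y : R -> Prop) (h : R -> Sigma),
    (1 <= m)%nat /\
    (forall y, Y y -> X y) /\ compact Y /\
    (forall y, Y y -> Y (iter f m y)) /\
    (forall y, Y y -> forall eps, 0 < eps -> exists delta, 0 < delta /\
        forall z, Y z -> Rabs (z - y) < delta -> dSigma (h z) (h y) < eps) /\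
    (forall a : Sigma, exists y, Y y /\ h y = a) /\
    (forall y, Y y -> h (iter f m y) = shift (h y)).

Definition D_chaotic (f : R -> R) (X : R -> Prop) : Prop :=
  exists Y : R -> Prop,
    (exists y, Y y) /\
    (forall y, Y y -> X y) /\ compact Y /\
    (forall y, Y y -> Y (f y)) /\
    (* topological transitivity of f|Y (basic open sets = relative balls) *)
    (forall x y eps, Y x -> Y y -> 0 < eps ->
        exists z n, Y z /\ (1 <= n)%nat /\ Rabs (z - x) < eps /\
                    Rabs (iter f n z - y) < eps) /\
    (forall x eps, Y x -> 0 < eps ->
        exists p, Y p /\ periodic_pt f p /\ Rabs (p - x) < eps) /\
    (exists delta, 0 < delta /\ forall x eps, Y x -> 0 < eps ->
        exists y n, Y y /\ Rabs (y - x) < eps /\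
                    delta < Rabs (iter f n x - iter f n y)).

(* Main.v *)
From Stdlib Require Import Reals Lra Lia ZArith Arith Factorial ClassicalEpsilon FunctionalExtensionality Classical.
From Coquelicot Require Import Coquelicot.
Require Import Defs.
Open Scope R_scope.

Fixpoint tt (k:nat) (y:R) : R := match k with 0%nat => 1 | S k' => tt k' y * y / INR (S k') end.

Lemma tt_eq : forall k y, tt k y = y ^ k / INR (fact k).
Proof.
  induction k; intros y.
  - simpl. field.
  - change (tt (S k) y) with (tt k y * y / INR (S k)). rewrite IHk. rewrite fact_simpl, mult_INR. change (y ^ S k) with (y * y ^ k).
    assert (0 < INR (fact k)) by (apply lt_0_INR, lt_O_fact).
    assert (0 < INR (S k)) by (apply lt_0_INR; lia).
    field. lra.
Qed.

Lemma exp_lb_taylor : forall y N, 0 <= y -> sum_f_R0 (fun k => tt k y) N <= exp y.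
Proof.
  intros y N Hy.
  assert (E : sum_f_R0 (fun k => tt k y) N = E1 y N).
  { unfold E1. apply sum_eq. intros i _. rewrite tt_eq. unfold Rdiv. ring. }
  rewrite E. apply growing_ineq; [|apply E1_cvg].
  intro n. unfold E1. change (sum_f_R0 ?f (S n)) with (sum_f_R0 f n + f (S n)).
  assert (0 <= / INR (fact (S n)) * y ^ S n).
  { apply Rmult_le_pos. left; apply Rinv_0_lt_compat, lt_0_INR, lt_O_fact.
    apply pow_le; lra. }
  lra.
Qed.

Lemma exp_lb_alt : forall y N, 0 <= y <= 1 ->
  sum_f_R0 (fun k => (-1)^k * tt k y) (S (2*N)) <= exp (- y).
Proof.
  intros y N Hy.
  assert (E : forall M, sum_f_R0 (fun k => (-1)^k * tt k y) M = sum_f_R0 (tg_alt (fun k => tt k y)) M).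
  { intros; reflexivity. }
  rewrite E.
  apply (alternated_series_ineq (fun k => tt k y) (exp (-y)) N).
  - intro n. change (tt (S n) y) with (tt n y * y / INR (S n)).
    assert (0 <= tt n y) by (rewrite tt_eq; apply Rmult_le_pos; [apply pow_le; lra| left; apply Rinv_0_lt_compat, lt_0_INR, lt_O_fact]).
    assert (1 <= INR (S n)) by (apply (le_INR 1); lia).
    unfold Rdiv. 
    assert (tt n y * y <= tt n y) by nra.
    assert (0 < / INR (S n) <= 1).
    { split. apply Rinv_0_lt_compat; lra. rewrite <- Rinv_1. apply Rinv_le_contravar; lra. }
    nra.
  - eapply Un_cv_ext; [|apply (cv_speed_pow_fact y)]. intros n; simpl. rewrite tt_eq. reflexivity.
  - eapply Un_cv_ext; [|apply (E1_cvg (-y))]. intros n. unfold E1. apply sum_eq. intros i _.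
    unfold tg_alt. rewrite tt_eq. replace (-y) with (-1 * y) by ring. rewrite Rpow_mult_distr. unfold Rdiv. ring.
Qed.

Lemma exp_k : forall k y, exp (INR k * y) = exp y ^ k.
Proof.
  induction k; intro y. simpl. rewrite Rmult_0_l, exp_0. reflexivity.
  rewrite S_INR, Rmult_plus_distr_r, exp_plus, IHk, Rmult_1_l. simpl. ring.
Qed.

Lemma exp_pos_lb : forall q y k a L, 0 <= y -> q = INR k * y ->
  a <= sum_f_R0 (fun k => tt k y) 8 -> 0 <= a -> L <= a ^ k -> L <= exp q.
Proof.
  intros q y k a L Hy Hq Ha Ha0 HL. subst q.
rewrite exp_k. eapply Rle_trans; [exact HL|]. apply pow_incr. split; auto.
  eapply Rle_trans; [exact Ha| apply exp_lb_taylor; auto].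
Qed.


Lemma exp_neg_lb : forall q y k a L, 0 <= y <= 1 -> q = - (INR k * y) ->
  a <= sum_f_R0 (fun k => (-1)^k * tt k y) 9 -> 0 <= a -> L <= a ^ k -> L <= exp q.
Proof.
  intros q y k a L Hy Hq Ha Ha0 HL. subst q.
  replace (- (INR k * y)) with (INR k * (-y)) by ring. rewrite exp_k.
  eapply Rle_trans; [exact HL|]. apply pow_incr. split; auto.
  eapply Rle_trans; [exact Ha| apply (exp_lb_alt y 4); auto].
Qed.

Lemma exp_pos_ub : forall q y k a U, 0 <= y <= 1 -> q = INR k * y ->
  a <= sum_f_R0 (fun k => (-1)^k * tt k y) 9 -> 0 < a -> / a ^ k <= U -> exp q <= U.
Proof.
  intros q y k a U Hy Hq Ha Ha0 HU. subst q.
  assert (exp (- (INR k * y)) >= a ^ k).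
  { apply Rle_ge. apply (exp_neg_lb _ y k a); auto; try lra. }
  replace (exp (INR k * y)) with (/ exp (- (INR k * y))).
  2:{ rewrite exp_Ropp, Rinv_inv. reflexivity. }
  eapply Rle_trans; [|exact HU]. apply Rinv_le_contravar. apply pow_lt; auto. lra.
Qed.

Lemma exp_neg_ub : forall q y k a U, 0 <= y -> q = - (INR k * y) ->
  a <= sum_f_R0 (fun k => tt k y) 8 -> 0 < a -> / a ^ k <= U -> exp q <= U.
Proof.
  intros q y k a U Hy Hq Ha Ha0 HU. subst q.
  assert (exp (INR k * y) >= a ^ k).
  { apply Rle_ge. apply (exp_pos_lb _ y k a); auto; lra. }
  rewrite exp_Ropp.
  eapply Rle_trans; [|exact HU]. apply Rinv_le_contravar. apply pow_lt; auto. lra.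
Qed.

Ltac expnum := simpl; lra.


Lemma fr_deriv : forall r x, derivable_pt_lim (fr r) x (x * (2 - x) * exp (r - x)).
Proof.
  intros r x. apply is_derive_Reals. unfold fr.
  auto_derive; auto. replace (r + - x) with (r - x) by ring. ring.
Qed.

Lemma fr_cont : forall r x, continuity_pt (fr r) x.
Proof.
  intros r x. apply derivable_continuous_pt. exists (x * (2 - x) * exp (r - x)). apply fr_deriv.
Qed.

Lemma fr_inc : forall r x y, 0 <= x -> x <= y -> y <= 2 -> fr r x <= fr r y.
Proof.
  intros r x y H0 H1 H2. destruct (Req_dec x y) as [->|Hne]; [lra|].
  destruct (MVT_cor2 (fr r) (fun x => x * (2 - x) * exp (r - x)) x y) as [c [Hc1 Hc2]]; [lra| intros; apply fr_deriv |].
  assert (0 <= c * (2 - c) * exp (r - c)).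
  { apply Rmult_le_pos; [apply Rmult_le_pos; lra| left; apply exp_pos]. }
  nra.
Qed.

Lemma fr_dec : forall r x y, 2 <= x -> x <= y -> fr r y <= fr r x.
Proof.
  intros r x y H1 H2. destruct (Req_dec x y) as [->|Hne]; [lra|].
  destruct (MVT_cor2 (fr r) (fun x => x * (2 - x) * exp (r - x)) x y) as [c [Hc1 Hc2]]; [lra| intros; apply fr_deriv |].
  assert (0 <= c * (c - 2) * exp (r - c)).
  { apply Rmult_le_pos; [apply Rmult_le_pos; lra| left; apply exp_pos]. }
  nra.
Qed.

Lemma fr_rmono : forall r r' x, r <= r' -> fr r x <= fr r' x.
Proof.
  intros. unfold fr. apply Rmult_le_compat_l. apply pow2_ge_0.
  destruct (Req_dec r r') as [->|]; [lra|]. left; apply exp_increasing; lra.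
Qed.

Lemma fr_max : forall r x, 0 <= x -> fr r x <= fr r 2.
Proof.
  intros. destruct (Rle_dec x 2). apply fr_inc; lra. apply fr_dec; lra.
Qed.

Lemma fr_pos : forall r x, 0 < x -> 0 < fr r x.
Proof. intros. unfold fr. apply Rmult_lt_0_compat. apply pow_lt; lra. apply exp_pos. Qed.

Lemma fr_2 : forall r, fr r 2 = 4 * exp (r - 2).
Proof. intros; unfold fr; ring. Qed.

Lemma enc_dec : forall rl rh xl xh lo hi, 2 <= xl -> xl <= xh ->
  lo <= xh * xh * exp (rl - xh) -> xl * xl * exp (rh - xl) <= hi ->
  forall r x, rl <= r <= rh -> xl <= x <= xh -> lo <= fr r x <= hi.
Proof.
  intros rl rh xl xh lo hi H1 H2 Hlo Hhi r x Hr Hx. split.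
  - eapply Rle_trans; [exact Hlo|]. eapply Rle_trans; [|apply fr_dec with (x:=x) (y:=xh); lra].
    eapply Rle_trans; [|apply fr_rmono with (r:=rl); lra]. unfold fr; apply Req_le; ring.
  - eapply Rle_trans; [|exact Hhi]. eapply Rle_trans; [apply fr_dec with (x:=xl) (y:=x); lra|].
    eapply Rle_trans; [apply fr_rmono with (r':=rh); lra|]. unfold fr; apply Req_le; ring.
Qed.

Lemma enc_inc : forall rl rh xl xh lo hi, 0 <= xl -> xl <= xh -> xh <= 2 ->
  lo <= xl * xl * exp (rl - xl) -> xh * xh * exp (rh - xh) <= hi ->
  forall r x, rl <= r <= rh -> xl <= x <= xh -> lo <= fr r x <= hi.
Proof.
  intros rl rh xl xh lo hi H0 H1 H2 Hlo Hhi r x Hr Hx. split.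
  - eapply Rle_trans; [exact Hlo|]. eapply Rle_trans; [|apply fr_inc with (x:=xl) (y:=x); lra].
    eapply Rle_trans; [|apply fr_rmono with (r:=rl); lra]. unfold fr; apply Req_le; ring.
  - eapply Rle_trans; [|exact Hhi]. eapply Rle_trans; [apply fr_inc with (x:=x) (y:=xh); lra|].
    eapply Rle_trans; [apply fr_rmono with (r':=rh); lra|]. unfold fr; apply Req_le; ring.
Qed.

Lemma enc_mid : forall rl rh xl xh lo hi, 0 <= xl -> xl <= 2 -> 2 <= xh ->
  lo <= xl * xl * exp (rl - xl) -> lo <= xh * xh * exp (rl - xh) -> 4 * exp (rh - 2) <= hi ->
  forall r x, rl <= r <= rh -> xl <= x <= xh -> lo <= fr r x <= hi.
Proof.
  intros rl rh xl xh lo hi H0 H1 H2 Hlo Hlo' Hhi r x Hr Hx. split.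
  - destruct (Rle_dec x 2).
    + eapply Rle_trans; [exact Hlo|]. eapply Rle_trans; [|apply fr_inc with (x:=xl) (y:=x); lra].
      eapply Rle_trans; [|apply fr_rmono with (r:=rl); lra]. unfold fr; apply Req_le; ring.
    + eapply Rle_trans; [exact Hlo'|]. eapply Rle_trans; [|apply fr_dec with (x:=x) (y:=xh); lra].
      eapply Rle_trans; [|apply fr_rmono with (r:=rl); lra]. unfold fr; apply Req_le; ring.
  - eapply Rle_trans; [|exact Hhi]. eapply Rle_trans; [apply fr_max; lra|].
    rewrite <- fr_2. apply fr_rmono; lra.
Qed.

Definition mexp (s mu p q : R) (h : R -> R) : Prop :=
  forall x x', p <= x -> x <= x' -> x' <= q -> mu * (x' - x) <= s * (h x' - h x).

Lemma mexp_comp : forall s1 s2 m1 m2 p q ql qh h1 h2,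
  (s1 = 1 \/ s1 = -1) -> 0 <= m1 -> 0 <= m2 ->
  mexp s1 m1 p q h1 -> (forall x, p <= x <= q -> ql <= h1 x <= qh) -> mexp s2 m2 ql qh h2 ->
  mexp (s1 * s2) (m1 * m2) p q (fun x => h2 (h1 x)).
Proof.
  intros s1 s2 m1 m2 p q ql qh h1 h2 Hs Hm1 Hm2 E1 Hr E2 x x' Hx Hxx' Hx'.
  pose proof (E1 x x' Hx Hxx' Hx') as A.
  destruct (Hr x) as [B1 B2]; [lra|]. destruct (Hr x') as [B3 B4]; [lra|].
  destruct Hs as [-> | ->].
  - assert (h1 x <= h1 x') by nra.
    pose proof (E2 (h1 x) (h1 x') B1 H B4). nra.
  - assert (h1 x' <= h1 x) by nra.
    pose proof (E2 (h1 x') (h1 x) B3 H B2). nra.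
Qed.

Lemma mexp_join : forall s m p c q h, mexp s m p c h -> mexp s m c q h -> mexp s m p q h.
Proof.
  intros s m p c q h E1 E2 x x' Hx Hxx' Hx'.
  destruct (Rle_dec x' c). apply E1; lra.
  destruct (Rle_dec c x). apply E2; lra.
  pose proof (E1 x c Hx ltac:(lra) ltac:(lra)). pose proof (E2 c x' ltac:(lra) ltac:(lra) Hx'). nra.
Qed.

Lemma mexp_weak : forall s m m' p q h, m' <= m -> mexp s m p q h -> mexp s m' p q h.
Proof. intros s m m' p q h Hm E x x' H1 H2 H3. pose proof (E x x' H1 H2 H3). nra. Qed.

Lemma mexp_abs : forall s m p q h, (s = 1 \/ s = -1) -> mexp s m p q h ->
  forall x x', p <= x <= q -> p <= x' <= q -> m * Rabs (x - x') <= Rabs (h x - h x').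
Proof.
  intros s m p q h Hs E x x' Hx Hx'.
  assert (K : forall u v, s * (u - v) <= Rabs (u - v) /\ s * (v - u) <= Rabs (u - v)).
  { intros u v. unfold Rabs; destruct Rcase_abs; destruct Hs as [-> | ->]; split; lra. }
  destruct (Rle_dec x x').
  - pose proof (E x x' ltac:(lra) r ltac:(lra)).
    rewrite (Rabs_left1 (x - x')) by lra. destruct (K (h x) (h x')). lra.
  - pose proof (E x' x ltac:(lra) ltac:(lra) ltac:(lra)).
    rewrite (Rabs_right (x - x')) by lra. destruct (K (h x) (h x')). lra.
Qed.

Lemma fexp_dec : forall rl p q mu r, 2 <= p -> p <= q -> mu <= p * (p - 2) * exp (rl - q) -> rl <= r ->
  mexp (-1) mu p q (fr r).
Proof.
  intros rl p q mu r Hp Hpq Hmu Hr x x' H1 H2 H3.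
  destruct (Req_dec x x') as [->|Hne]. lra.
  destruct (MVT_cor2 (fr r) (fun x => x * (2 - x) * exp (r - x)) x x') as [c [Hc1 Hc2]]; [lra| intros; apply fr_deriv |].
  rewrite Hc1.
  assert (p * (p - 2) <= c * (c - 2)) by nra.
  assert (exp (rl - q) <= exp (r - c)).
  { destruct (Req_dec (rl - q) (r - c)) as [E|E]. rewrite E; lra. left; apply exp_increasing; lra. }
  assert (0 <= p * (p-2)) by nra.
  assert (0 < exp (rl - q)) by apply exp_pos.
  assert (mu <= c * (c - 2) * exp (r - c)) by nra.
  nra.
Qed.

Lemma fexp_inc : forall rl p q mu r, 0 <= p -> p <= q -> q <= 2 ->
  mu <= p * (2 - p) * exp (rl - q) -> mu <= q * (2 - q) * exp (rl - q) -> rl <= r ->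
  mexp 1 mu p q (fr r).
Proof.
  intros rl p q mu r Hp Hpq Hq Hmu Hmu' Hr x x' H1 H2 H3.
  destruct (Req_dec x x') as [->|Hne]. lra.
  destruct (MVT_cor2 (fr r) (fun x => x * (2 - x) * exp (r - x)) x x') as [c [Hc1 Hc2]]; [lra| intros; apply fr_deriv |].
  rewrite Hc1.
  assert (Hm: Rmin (p * (2 - p)) (q * (2 - q)) <= c * (2 - c)).
  { assert (c * (2 - c) >= p * (2 - p) \/ c * (2 - c) >= q * (2 - q)).
    { destruct (Rle_dec (c + p) 2). left. nra. right. nra. }
    unfold Rmin; destruct Rle_dec; lra. }
  assert (exp (rl - q) <= exp (r - c)).
  { destruct (Req_dec (rl - q) (r - c)) as [E|E]. rewrite E; lra. left; apply exp_increasing; lra. }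
  assert (0 <= Rmin (p * (2 - p)) (q * (2 - q))) by (unfold Rmin; destruct Rle_dec; nra).
  assert (0 < exp (rl - q)) by apply exp_pos.
  assert (mu <= Rmin (p * (2 - p)) (q * (2 - q)) * exp (rl - q)) by (unfold Rmin; destruct Rle_dec; nra).
  assert (mu <= c * (2 - c) * exp (r - c)) by nra.
  nra.
Qed.

Lemma exp_le_mono : forall a b, a <= b -> exp a <= exp b.
Proof. intros a b H. destruct (Req_dec a b) as [->|]; [lra|]. left; apply exp_increasing; lra. Qed.

Lemma fr_gt_id : forall rl al ah r x, rl <= r -> al <= x <= ah -> 0 < al -> 1 < al * exp (rl - ah) -> x < fr r x.
Proof.
  intros rl al ah r x Hr Hx Hal H.
  assert (exp (rl - ah) <= exp (r - x)) by (apply exp_le_mono; lra).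
  assert (0 < exp (rl - ah)) by apply exp_pos.
  assert (1 < x * exp (r - x)) by nra.
  unfold fr. simpl. nra.
Qed.

Definition HSfacts r a0 b0 a1 b1 lam :=
 0 < a0 /\ a0 < b0 /\ b0 < a1 /\ a1 < b1 /\ 1 < lam /\
 fr r (fr r a0) <= a0 /\ b1 <= fr r (fr r b0) /\ b1 <= fr r (fr r a1) /\ fr r (fr r b1) <= a0 /\
 mexp 1 lam a0 b0 (fun x => fr r (fr r x)) /\ mexp (-1) lam a1 b1 (fun x => fr r (fr r x)) /\
 fr r (fr r 2) < fr r (fr r (fr r 2)) /\ fr r (fr r (fr r 2)) < 2 /\ fr r (fr r 2) <= a0 /\ b1 <= fr r 2.

Lemma iter_S : forall h n x, iter h (S n) x = h (iter h n x).
Proof. reflexivity. Qed.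

Lemma iter_add : forall h n m x, iter h (n + m) x = iter h n (iter h m x).
Proof. intros h n m x. induction n; simpl; [reflexivity|]. unfold iter in *. simpl. rewrite IHn. reflexivity. Qed.

Lemma iter_Sr : forall h n x, iter h (S n) x = iter h n (h x).
Proof. intros. replace (S n) with (n + 1)%nat by lia. rewrite iter_add. reflexivity. Qed.

Lemma iter_double : forall h n x, iter h (2 * n) x = iter (fun y => h (h y)) n x.
Proof.
  intros h n x. induction n. reflexivity.
  replace (2 * S n)%nat with (S (S (2 * n))) by lia.
  rewrite !iter_S, IHn. reflexivity.
Qed.

Lemma iter_cont : forall h, (forall x, continuity_pt h x) -> forall n x, continuity_pt (iter h n) x.
Proof.
  intros h Hh n. induction n; intro x.
  - apply derivable_continuous_pt. apply derivable_pt_id.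
  - change (iter h (S n)) with (fun y => h (iter h n y)).
    apply (continuity_pt_comp (iter h n) h x); auto.
Qed.

Lemma cont_eps : forall h x, continuity_pt h x -> forall eps, 0 < eps ->
  exists delta, 0 < delta /\ forall z, Rabs (z - x) < delta -> Rabs (h z - h x) < eps.
Proof.
  intros h x Hc eps He.
  destruct (Hc eps He) as [d [Hd H]].
  exists d. split; auto. intros z Hz.
  destruct (Req_dec z x) as [->|Hne].
  - unfold Rminus. rewrite Rplus_opp_r, Rabs_R0. auto.
  - apply (H z). split. split; [exact I| auto]. exact Hz.
Qed.

Lemma limsup_pos : forall (u : nat -> R) c, 0 < c -> (forall M, exists n, (M <= n)%nat /\ c <= u n) ->
  Rbar_lt 0 (LimSup_seq u).
Proof.
  intros u c Hc H.
  destruct (ex_LimSup_seq u) as [l Hl].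
  rewrite (is_LimSup_seq_unique u l Hl).
  destruct l as [l0| |]; simpl in *; auto.
  - destruct (Rlt_dec 0 l0) as [|Hn]; auto. exfalso.
    destruct (Hl (mkposreal (c/2) ltac:(lra))) as [_ [N HN]].
    destruct (H N) as [n [Hn1 Hn2]]. specialize (HN n Hn1). simpl in HN. lra.
  - destruct (Hl 0) as [N HN]. destruct (H N) as [n [Hn1 Hn2]]. specialize (HN n Hn1). lra.
Qed.

Lemma liminf_zero : forall (u : nat -> R), (forall n, 0 <= u n) ->
  (forall eps, 0 < eps -> forall M, exists n, (M <= n)%nat /\ u n < eps) ->
  LimInf_seq u = Finite 0.
Proof.
  intros u H0 H. apply is_LimInf_seq_unique. simpl. intros eps. split.
  - intros N. destruct (H eps (cond_pos eps) N) as [n [Hn1 Hn2]]. exists n. split; auto. lra.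
  - exists O. intros n _. pose proof (H0 n). pose proof (cond_pos eps). lra.
Qed.

Lemma pow_big : forall lam M, 1 < lam -> exists N, M < lam ^ N.
Proof.
  intros lam M Hl.
  assert (B : forall n, 1 + INR n * (lam - 1) <= lam ^ n).
  { induction n. simpl; lra. rewrite S_INR. simpl.
    assert (0 <= INR n) by apply pos_INR.
    assert (lam * (1 + INR n * (lam - 1)) <= lam * lam ^ n) by (apply Rmult_le_compat_l; lra).
    assert (0 <= INR n * (lam-1) * (lam-1)) by (apply Rmult_le_pos; [apply Rmult_le_pos|]; lra).
    nra. }
  destruct (archimed (M / (lam - 1))) as [Hup _].
  destruct (Rle_dec (IZR (up (M / (lam - 1)))) 0) as [Hle|Hgt].
  - exists O. simpl. 
    assert (M / (lam - 1) < 0) by lra.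
    assert (M < 0). { apply Rnot_le_lt. intro. assert (0 <= M / (lam-1)) by (apply Rdiv_le_0_compat; lra). lra. }
    lra.
  - apply Rnot_le_lt in Hgt.
    exists (Z.to_nat (up (M / (lam - 1)))).
    specialize (B (Z.to_nat (up (M / (lam - 1))))).
    rewrite INR_IZR_INZ, Z2Nat.id in B by (apply le_IZR; lra).
    assert (M / (lam - 1) * (lam - 1) = M) by (field; lra).
    nra.
Qed.

Lemma not_interval_open : forall c d y, ~ (c <= y <= d) ->
  exists delta, 0 < delta /\ forall z, Rabs (z - y) < delta -> ~ (c <= z <= d).
Proof.
  intros c d y H.
  destruct (Rlt_dec y c).
  - exists (c - y). split; [lra|]. intros z Hz [H1 H2]. apply Rabs_def2 in Hz. lra.
  - assert (d < y) by (apply Rnot_le_lt; intro; apply H; lra).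
    exists (y - d). split; [lra|]. intros z Hz [H1 H2]. apply Rabs_def2 in Hz. lra.
Qed.

Lemma closed_of_eps : forall P : R -> Prop,
  (forall x, ~ P x -> exists delta, 0 < delta /\ forall z, Rabs (z - x) < delta -> ~ P z) ->
  closed_set P.
Proof.
  intros P H. unfold closed_set, open_set. intros x Hx.
  destruct (H x Hx) as [d [Hd Hz]].
  exists (mkposreal d Hd). intros z Hzd. unfold disc in Hzd. simpl in Hzd. apply Hz. exact Hzd.
Qed.

Lemma closed_eps : forall P : R -> Prop, closed_set P ->
  forall x, ~ P x -> exists delta, 0 < delta /\ forall z, Rabs (z - x) < delta -> ~ P z.
Proof.
  intros P H x Hx. destruct (H x Hx) as [d Hd].
  exists d. split; [apply cond_pos|]. intros z Hz. apply Hd. unfold disc. exact Hz.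
Qed.

Lemma closed_union : forall P Q : R -> Prop, closed_set P -> closed_set Q ->
  closed_set (fun x => P x \/ Q x).
Proof.
  intros P Q HP HQ. apply closed_of_eps. intros x Hx.
  destruct (closed_eps P HP x) as [d1 [Hd1 H1]]; [tauto|].
  destruct (closed_eps Q HQ x) as [d2 [Hd2 H2]]; [tauto|].
  exists (Rmin d1 d2). split; [apply Rmin_pos; auto|].
  intros z Hz [Hp|Hq].
  - apply (H1 z); auto. eapply Rlt_le_trans; [exact Hz| apply Rmin_l].
  - apply (H2 z); auto. eapply Rlt_le_trans; [exact Hz| apply Rmin_r].
Qed.

Lemma bitdiff_eq : forall a, bitdiff a a = 0.
Proof. intros [|]; reflexivity. Qed.

Lemma bitdiff_bnd : forall a b, 0 <= bitdiff a b <= 1.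
Proof. intros [|] [|]; unfold bitdiff; simpl; lra. Qed.

Lemma dSigma_small : forall (a b : Sigma) N,
  (forall k, (k < N)%nat -> a k = b k) -> dSigma a b <= 2 * (1/2) ^ N.
Proof.
  intros a b N H. unfold dSigma.
  set (u := fun i => bitdiff (a i) (b i) / 2 ^ i).
  assert (Hu : forall i, 0 <= u i <= (1/2) ^ i).
  { intro i. unfold u. pose proof (bitdiff_bnd (a i) (b i)).
    assert (0 < 2 ^ i) by (apply pow_lt; lra).
    rewrite Rdiv_1_l, pow_inv. unfold Rdiv. split.
    apply Rmult_le_pos; [lra| left; apply Rinv_0_lt_compat; auto].
    rewrite <- (Rmult_1_l (/ 2 ^ i)) at 2. apply Rmult_le_compat_r; [left; apply Rinv_0_lt_compat; auto| lra]. }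
  assert (Hg : Rabs (1/2) < 1) by (rewrite Rabs_pos_eq; lra).
  assert (Hex : ex_series u).
  { apply (ex_series_le u (fun i => (1/2)^i)); [|apply ex_series_geom; auto].
    intros n. unfold norm; simpl. unfold abs; simpl. rewrite Rabs_pos_eq; apply Hu. }
  destruct N as [|N].
  - simpl. eapply Rle_trans. apply (Series_le u (fun i => (1/2)^i)); [auto| apply ex_series_geom; auto].
    rewrite Series_geom; auto. lra.
  - rewrite (Series_incr_n u (S N)); [|lia|auto].
    assert (E : sum_f_R0 u (Init.Nat.pred (S N)) = 0).
    { simpl. apply (sum_eq_R0 u N). intros k Hk. unfold u. rewrite H by lia. rewrite bitdiff_eq. unfold Rdiv; ring. }
    rewrite E, Rplus_0_l.
    eapply Rle_trans. apply (Series_le _ (fun k => (1/2)^(S N) * (1/2)^k)).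
    { intros n. split. apply Hu. rewrite <- pow_add. apply Hu. }
    { exact (ex_series_scal_l ((1/2)^(S N)) (fun k => (1/2)^k) (ex_series_geom _ Hg)). }
    rewrite Series_scal_l, Series_geom; auto. lra.
Qed.

Lemma sigma_uncountable : ~ exists G : Sigma -> nat, forall s t, G s = G t -> s = t.
Proof.
  intros [G HG].
  set (F := fun k : nat => epsilon (inhabits (fun _ : nat => true)) (fun t : Sigma => G t = k)).
  set (d := fun k : nat => negb (F k k)).
  assert (HF : F (G d) = d).
  { apply HG. unfold F. apply (@epsilon_spec _ _ (fun t : Sigma => G t = G d)). exists d; reflexivity. }
  assert (E : d (G d) = negb (F (G d) (G d))) by reflexivity.
  rewrite HF in E. destruct (d (G d)); discriminate.
Qed.

Section HS.
Variable f : R -> R.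
Hypothesis fcont : forall x, continuity_pt f x.
Variables a0 b0 a1 b1 lam : R.
Hypothesis H01 : a0 < b0.
Hypothesis H02 : b0 < a1.
Hypothesis H03 : a1 < b1.
Hypothesis Hlam : 1 < lam.

Definition gg (x : R) : R := f (f x).
Hypothesis cov0 : forall y, a0 <= y <= b1 -> exists x, a0 <= x <= b0 /\ gg x = y.
Hypothesis cov1 : forall y, a0 <= y <= b1 -> exists x, a1 <= x <= b1 /\ gg x = y.
Hypothesis exp0 : forall x x', a0 <= x <= b0 -> a0 <= x' <= b0 -> lam * Rabs (x - x') <= Rabs (gg x - gg x').
Hypothesis exp1 : forall x x', a1 <= x <= b1 -> a1 <= x' <= b1 -> lam * Rabs (x - x') <= Rabs (gg x - gg x').

Lemma gg_cont : forall x, continuity_pt gg x.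
Proof. intro x. unfold gg. apply (continuity_pt_comp f f x); auto. Qed.

Definition Iof (b : bool) (x : R) : Prop := if b then a1 <= x <= b1 else a0 <= x <= b0.
Definition inI x := a0 <= x <= b0 \/ a1 <= x <= b1.
Definition sym (x : R) : bool := if Rle_dec x ((b0 + a1) / 2) then false else true.
Definition Yset x := forall n, inI (iter gg n x).
Definition code (x : R) : Sigma := fun n => sym (iter gg n x).
Definition DD := b1 - a0.
Definition gap := a1 - b0.

Lemma gap_pos : 0 < gap. Proof. unfold gap; lra. Qed.

Lemma inI_Iof : forall x, inI x -> Iof (sym x) x.
Proof. intros x [H|H]; unfold sym; destruct Rle_dec; simpl; lra. Qed.

Lemma Iof_sym : forall b x, Iof b x -> sym x = b /\ inI x.
Proof.
  intros [|] x H; simpl in H; unfold sym, inI; destruct Rle_dec; split; try lra; reflexivity.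
Qed.

Lemma Iof_H : forall b x, Iof b x -> a0 <= x <= b1.
Proof. intros [|] x H; simpl in H; lra. Qed.

Lemma Iof_exp : forall b x x', Iof b x -> Iof b x' -> lam * Rabs (x - x') <= Rabs (gg x - gg x').
Proof. intros [|] x x' H H'; simpl in *; auto. Qed.

Lemma Iof_cov : forall b y, a0 <= y <= b1 -> exists x, Iof b x /\ gg x = y.
Proof. intros [|] y H; simpl; auto. Qed.

Lemma Y_H : forall x, Yset x -> a0 <= x <= b1.
Proof. intros x H. destruct (H O) as [K|K]; simpl in K; lra. Qed.

Lemma Y_inI : forall x, Yset x -> inI x.
Proof. intros x H. exact (H O). Qed.

Lemma Y_gg : forall x, Yset x -> Yset (gg x).
Proof. intros x H n. rewrite <- iter_Sr. apply H. Qed.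

Lemma Y_iter : forall n x, Yset x -> Yset (iter gg n x).
Proof. induction n; intros x H; [exact H|]. rewrite iter_S. apply Y_gg, IHn, H. Qed.

Lemma code_gg : forall x, code (gg x) = shift (code x).
Proof. intros x. apply functional_extensionality. intro n. unfold code, shift. rewrite iter_Sr. reflexivity. Qed.

Lemma code_iter : forall n x k, code (iter gg n x) k = code x (n + k)%nat.
Proof. intros n x k. unfold code. rewrite <- iter_add, Nat.add_comm. reflexivity. Qed.

Lemma same_sym : forall u v, inI u -> inI v -> Rabs (u - v) < gap -> sym u = sym v.
Proof.
  intros u v Hu Hv H. unfold gap in H. apply Rabs_def2 in H.
  unfold sym; destruct Hu, Hv; do 2 destruct Rle_dec; try reflexivity; lra.
Qed.

Lemma sep : forall u v, inI u -> inI v -> sym u <> sym v -> gap <= Rabs (u - v).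
Proof.
  intros u v Hu Hv H. destruct (Rle_dec gap (Rabs (u - v))) as [K|K]; auto.
  exfalso. apply H. apply same_sym; auto. lra.
Qed.

Lemma close_N : forall N x y, Yset x -> Yset y -> (forall k, (k < N)%nat -> code x k = code y k) ->
  lam ^ N * Rabs (x - y) <= DD.
Proof.
  induction N; intros x y Hx Hy H.
  - simpl. pose proof (Y_H x Hx). pose proof (Y_H y Hy). unfold DD.
    unfold Rabs; destruct Rcase_abs; lra.
  - assert (E : sym x = sym y) by (apply (H O); lia).
    pose proof (inI_Iof x (Y_inI x Hx)) as Ix. pose proof (inI_Iof y (Y_inI y Hy)) as Iy.
    rewrite <- E in Iy.
    pose proof (Iof_exp _ _ _ Ix Iy) as Ex.
    assert (IH : lam ^ N * Rabs (gg x - gg y) <= DD).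
    { apply IHN; try apply Y_gg; auto. intros k Hk. rewrite !code_gg. unfold shift. apply H. lia. }
    simpl. assert (0 <= lam ^ N) by (apply pow_le; lra).
    assert (lam ^ N * (lam * Rabs (x - y)) <= lam ^ N * Rabs (gg x - gg y)) by (apply Rmult_le_compat_l; auto).
    lra.
Qed.

Lemma close_eps : forall eps, 0 < eps -> exists N, (1 <= N)%nat /\
  forall x y, Yset x -> Yset y -> (forall k, (k < N)%nat -> code x k = code y k) -> Rabs (x - y) < eps.
Proof.
  intros eps He. destruct (pow_big lam (DD / eps) Hlam) as [N0 HN0].
  exists (S N0). split; [lia|]. intros x y Hx Hy H.
  pose proof (close_N (S N0) x y Hx Hy H) as C.
  assert (lam ^ N0 <= lam ^ S N0) by (apply Rle_pow; [lra|lia]).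
  destruct (Rlt_dec (Rabs (x - y)) eps) as [|K]; auto. exfalso.
  assert (eps <= Rabs (x - y)) by lra.
  assert (DD / eps * eps = DD) by (field; lra).
  assert (0 <= lam ^ S N0) by (apply pow_le; lra).
  assert (lam ^ S N0 * eps <= lam ^ S N0 * Rabs (x - y)) by (apply Rmult_le_compat_l; auto).
  assert (DD / eps * eps < lam ^ S N0 * eps) by (apply Rmult_lt_compat_r; lra).
  lra.
Qed.

Lemma code_inj : forall x y, Yset x -> Yset y -> code x = code y -> x = y.
Proof.
  intros x y Hx Hy E. destruct (Req_dec x y) as [|Hne]; auto. exfalso.
  assert (P : 0 < Rabs (x - y)) by (apply Rabs_pos_lt; lra).
  destruct (close_eps _ P) as [N [_ HN]].
  specialize (HN x y Hx Hy (fun k _ => f_equal (fun c => c k) E)). lra.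
Qed.

Definition phi (b : bool) (y : R) : R := epsilon (inhabits 0) (fun x => Iof b x /\ gg x = y).

Lemma phi_spec : forall b y, a0 <= y <= b1 -> Iof b (phi b y) /\ gg (phi b y) = y.
Proof. intros b y H. unfold phi. apply (@epsilon_spec _ _ (fun x => Iof b x /\ gg x = y)). apply Iof_cov; auto. Qed.

Lemma phi_contr : forall b y y', a0 <= y <= b1 -> a0 <= y' <= b1 ->
  lam * Rabs (phi b y - phi b y') <= Rabs (y - y').
Proof.
  intros b y y' H H'. destruct (phi_spec b y H) as [I1 E1]. destruct (phi_spec b y' H') as [I2 E2].
  pose proof (Iof_exp _ _ _ I1 I2). rewrite E1, E2 in H0. exact H0.
Qed.

Fixpoint chain (s : Sigma) (n : nat) : R :=
  match n with O => a0 | S n' => phi (s O) (chain (shift s) n') end.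

Lemma chain_H : forall n s, a0 <= chain s n <= b1.
Proof.
  induction n; intro s; simpl. lra.
  apply (Iof_H (s O)). apply phi_spec. apply IHn.
Qed.

Lemma chain_diff : forall n s m1 m2, (n <= m1)%nat -> (n <= m2)%nat ->
  lam ^ n * Rabs (chain s m1 - chain s m2) <= DD.
Proof.
  induction n; intros s m1 m2 H1 H2.
  - simpl. pose proof (chain_H m1 s). pose proof (chain_H m2 s). unfold DD.
    unfold Rabs; destruct Rcase_abs; lra.
  - destruct m1 as [|m1]; [lia|]. destruct m2 as [|m2]; [lia|]. simpl chain.
    pose proof (phi_contr (s O) _ _ (chain_H m1 (shift s)) (chain_H m2 (shift s))) as C.
    pose proof (IHn (shift s) m1 m2 ltac:(lia) ltac:(lia)) as I.
    assert (0 <= lam ^ n) by (apply pow_le; lra).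
    assert (lam ^ n * (lam * Rabs (phi (s O) (chain (shift s) m1) - phi (s O) (chain (shift s) m2)))
            <= lam ^ n * Rabs (chain (shift s) m1 - chain (shift s) m2)) by (apply Rmult_le_compat_l; auto).
    simpl pow. lra.
Qed.

Lemma chain_cauchy : forall s, Cauchy_crit (chain s).
Proof.
  intros s eps He. destruct (pow_big lam (DD / eps) Hlam) as [N HN].
  exists N. intros n m Hn Hm. unfold R_dist.
  pose proof (chain_diff N s n m Hn Hm) as C.
  destruct (Rlt_dec (Rabs (chain s n - chain s m)) eps) as [|K]; auto. exfalso.
  assert (eps <= Rabs (chain s n - chain s m)) by lra.
  assert (DD / eps * eps = DD) by (field; lra).
  assert (0 <= lam ^ N) by (apply pow_le; lra).
  assert (lam ^ N * eps <= lam ^ N * Rabs (chain s n - chain s m)) by (apply Rmult_le_compat_l; auto).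
  assert (DD / eps * eps < lam ^ N * eps) by (apply Rmult_lt_compat_r; lra).
  lra.
Qed.

Definition pt (s : Sigma) : R := proj1_sig (Rcomplete.R_complete (chain s) (chain_cauchy s)).

Lemma pt_cv : forall s, Un_cv (chain s) (pt s).
Proof. intro s. unfold pt. destruct Rcomplete.R_complete; simpl; auto. Qed.

Lemma cv_shift1 : forall u l, Un_cv u l -> Un_cv (fun n => u (S n)) l.
Proof. intros u l H eps He. destruct (H eps He) as [N HN]. exists N. intros n Hn. apply HN. lia. Qed.

Lemma cv_closed : forall u l c d, Un_cv u l -> (forall n, c <= u n <= d) -> c <= l <= d.
Proof.
  intros u l c d H B.
  assert (Cc : forall a, Un_cv (fun _ => a) a).
  { intros a eps He. exists O. intros. unfold R_dist. rewrite Rminus_diag, Rabs_R0. auto. }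
  split.
  - apply (@Rle_cv_lim (fun _ => c) u c l); auto. intro n; apply B.
  - apply (@Rle_cv_lim u (fun _ => d) l d); auto. intro n; apply B.
Qed.

Lemma pt_Iof : forall s, Iof (s O) (pt s).
Proof.
  intro s.
  assert (K : forall n, Iof (s O) (chain s (S n))).
  { intro n. simpl. apply phi_spec. apply chain_H. }
  pose proof (cv_shift1 _ _ (pt_cv s)) as C.
  destruct (s O); simpl in *; eapply cv_closed; eauto.
Qed.

Lemma pt_gg : forall s, gg (pt s) = pt (shift s).
Proof.
  intro s.
  pose proof (continuity_seq gg _ _ (gg_cont (pt s)) (cv_shift1 _ _ (pt_cv s))) as C.
  assert (C' : Un_cv (chain (shift s)) (gg (pt s))).
  { eapply Un_cv_ext; [|exact C]. intro n. simpl. apply phi_spec. apply chain_H. }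
  apply (UL_sequence _ _ _ C' (pt_cv (shift s))).
Qed.

Definition shiftn (n : nat) (s : Sigma) : Sigma := fun k => s (n + k)%nat.

Lemma pt_iter : forall n s, iter gg n (pt s) = pt (shiftn n s).
Proof.
  induction n; intro s. reflexivity.
  rewrite iter_S, IHn, pt_gg. f_equal. apply functional_extensionality. intro k.
  unfold shift, shiftn. f_equal. lia.
Qed.

Lemma exists_code : forall s, exists x, Yset x /\ code x = s.
Proof.
  intro s. exists (pt s).
  assert (K : forall n, Iof (s n) (iter gg n (pt s))).
  { intro n. rewrite pt_iter. pose proof (pt_Iof (shiftn n s)) as P. unfold shiftn in P.
    rewrite Nat.add_0_r in P. exact P. }
  split.
  - intro n. apply (Iof_sym (s n)). apply K.
  - apply functional_extensionality. intro n. unfold code. apply (Iof_sym (s n)). apply K.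
Qed.

Lemma Y_closed : closed_set Yset.
Proof.
  apply closed_of_eps. intros x Hx.
  apply not_all_ex_not in Hx. destruct Hx as [n Hn].
  unfold inI in Hn.
  destruct (not_interval_open a0 b0 (iter gg n x)) as [d1 [Hd1 K1]]; [tauto|].
  destruct (not_interval_open a1 b1 (iter gg n x)) as [d2 [Hd2 K2]]; [tauto|].
  destruct (cont_eps (iter gg n) x (iter_cont gg gg_cont n x) (Rmin d1 d2) (Rmin_pos _ _ Hd1 Hd2)) as [d [Hd K]].
  exists d. split; auto. intros z Hz HY.
  specialize (K z Hz). specialize (HY n).
  destruct HY as [P|P].
  - apply (K1 (iter gg n z)); auto. eapply Rlt_le_trans; [exact K| apply Rmin_l].
  - apply (K2 (iter gg n z)); auto. eapply Rlt_le_trans; [exact K| apply Rmin_r].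
Qed.

Lemma Y_compact : compact Yset.
Proof.
  apply (compact_P4 (fun c => a0 <= c <= b1)). apply compact_P3. apply Y_closed.
  intros x Hx. apply Y_H; auto.
Qed.

Lemma code_agree_near : forall N y, Yset y -> exists delta, 0 < delta /\
  forall z, Yset z -> Rabs (z - y) < delta -> forall k, (k < N)%nat -> code z k = code y k.
Proof.
  induction N; intros y Hy.
  - exists 1. split; [lra|]. intros; lia.
  - destruct (IHN y Hy) as [d1 [Hd1 K1]].
    destruct (cont_eps (iter gg N) y (iter_cont gg gg_cont N y) gap gap_pos) as [d2 [Hd2 K2]].
    exists (Rmin d1 d2). split; [apply Rmin_pos; auto|].
    intros z Hz Hzy k Hk.
    destruct (Nat.eq_dec k N) as [->|Hne].
    + unfold code. apply same_sym; try apply Y_inI, Y_iter; auto.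
      apply K2. eapply Rlt_le_trans; [exact Hzy| apply Rmin_r].
    + apply K1; auto; [|lia]. eapply Rlt_le_trans; [exact Hzy| apply Rmin_l].
Qed.

Lemma code_cont : forall y, Yset y -> forall eps, 0 < eps -> exists delta, 0 < delta /\
  forall z, Yset z -> Rabs (z - y) < delta -> dSigma (code z) (code y) < eps.
Proof.
  intros y Hy eps He.
  destruct (pow_big 2 (2 / eps) ltac:(lra)) as [N HN].
  destruct (code_agree_near N y Hy) as [d [Hd K]].
  exists d. split; auto. intros z Hz Hzy.
  eapply Rle_lt_trans. apply (dSigma_small _ _ N). apply K; auto.
  assert (0 < 2 ^ N) by (apply pow_lt; lra).
  rewrite Rdiv_1_l, pow_inv.
  assert (2 / eps * eps = 2) by (field; lra).
  assert (2 < 2 ^ N * eps) by (assert (2 / eps * eps < 2 ^ N * eps) by (apply Rmult_lt_compat_r; lra); lra).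
  apply (Rmult_lt_reg_l (2 ^ N)); auto.
  replace (2 ^ N * (2 * / 2 ^ N)) with 2 by (field; lra). lra.
Qed.


Variables A B : R.
Hypothesis HA : A <= a0.
Hypothesis HB : b1 <= B.
Hypothesis HXinv : forall x, A <= x <= B -> A <= f x <= B.

Lemma iter_f_double : forall n x, iter f (2 * n) x = iter gg n x.
Proof. intros n x. exact (iter_double f n x). Qed.

Lemma Y_X : forall x, Yset x -> A <= x <= B.
Proof. intros x H. pose proof (Y_H x H). lra. Qed.

Theorem BC_thm : BC_chaotic f (fun x => A <= x <= B).
Proof.
  exists 2%nat, Yset, code.
  split; [lia|]. split; [exact Y_X|]. split; [exact Y_compact|].
  split; [intros y Hy; apply Y_gg; auto|].
  split; [exact code_cont|].
  split; [exact exists_code|].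
  intros y Hy. apply code_gg.
Qed.

(* encoding of sequences into a scrambled family *)
Definition enc (t : Sigma) : Sigma := fun n =>
  let k := Nat.sqrt n in let i := (n - k * k)%nat in
  if (i <? k)%nat then false else if (i =? k)%nat then true else t (i - k - 1)%nat.

Lemma sqrt_eq : forall k i, (i <= 2 * k)%nat -> Nat.sqrt (k * k + i) = k.
Proof. intros k i H. apply Nat.sqrt_unique. split; nia. Qed.

Lemma enc_zero : forall t k i, (i < k)%nat -> enc t (k * k + i)%nat = false.
Proof.
  intros t k i H. unfold enc. rewrite sqrt_eq by lia.
  replace (k * k + i - k * k)%nat with i by lia.
  destruct (Nat.ltb_spec i k); [reflexivity| lia].
Qed.

Lemma enc_one : forall t k, enc t (k * k + k)%nat = true.
Proof.
  intros t k. unfold enc. rewrite sqrt_eq by lia.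
  replace (k * k + k - k * k)%nat with k by lia.
  rewrite Nat.ltb_irrefl, Nat.eqb_refl. reflexivity.
Qed.

Lemma enc_bit : forall t k i, (i < k)%nat -> enc t (k * k + k + 1 + i)%nat = t i.
Proof.
  intros t k i H. unfold enc.
  replace (k * k + k + 1 + i)%nat with (k * k + (k + 1 + i))%nat by lia.
  rewrite sqrt_eq by lia.
  replace (k * k + (k + 1 + i) - k * k)%nat with (k + 1 + i)%nat by lia.
  destruct (Nat.ltb_spec (k + 1 + i) k); [lia|].
  destruct (Nat.eqb_spec (k + 1 + i) k); [lia|]. f_equal. lia.
Qed.

Lemma enc_inj : forall t t', enc t = enc t' -> t = t'.
Proof.
  intros t t' E. apply functional_extensionality. intro i.
  rewrite <- (enc_bit t (S i) i), <- (enc_bit t' (S i) i) by lia. rewrite E. reflexivity.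
Qed.

Lemma window : forall d m, (1 <= m)%nat -> exists q, (d <= q * m < d + m)%nat.
Proof.
  induction d; intros m Hm. exists O. lia.
  destruct (IHd m Hm) as [q Hq].
  destruct (Nat.eq_dec (q * m) d) as [E|E].
  - exists (S q). simpl. lia.
  - exists q. lia.
Qed.

Lemma enc_not_evper : forall t m M, (1 <= m)%nat ->
  ~ (forall j, (M <= j)%nat -> enc t (j + m)%nat = enc t j).
Proof.
  intros t m M Hm H.
  set (P := ((M + 1) * (M + 1) + (M + 1))%nat).
  assert (HP : forall q, enc t (P + q * m)%nat = true).
  { induction q. rewrite Nat.add_0_r. apply enc_one.
    replace (P + S q * m)%nat with ((P + q * m) + m)%nat by lia.
    rewrite H by (unfold P; nia). exact IHq. }
  set (k := (P + m)%nat).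
  destruct (window (k * k - P) m Hm) as [q Hq].
  assert (E : (P + q * m = k * k + (P + q * m - k * k))%nat) by (unfold k in *; nia).
  specialize (HP q). rewrite E, enc_zero in HP. discriminate.
  unfold k in *. nia.
Qed.

Theorem LY_thm : LY_chaotic f (fun x => A <= x <= B).
Proof.
  exists (fun x => exists t, Yset x /\ code x = enc t).
  split; [intros x [t [Hx _]]; apply Y_X; auto|].
  split.
  { intros [G HG]. apply sigma_uncountable.
    exists (fun t => G (pt (enc t))). intros s t E.
    destruct (exists_code (enc s)) as [xs [Hxs Cs]].
    destruct (exists_code (enc t)) as [xt [Hxt Ct]].
    assert (Ps : pt (enc s) = xs).
    { apply code_inj. 
      - intro n. rewrite pt_iter. pose proof (pt_Iof (shiftn n (enc s))) as K. apply (Iof_sym _ _ K).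
      - auto.
      - rewrite Cs. apply functional_extensionality. intro n. unfold code. rewrite pt_iter.
        pose proof (pt_Iof (shiftn n (enc s))) as K. apply Iof_sym in K. destruct K as [K _].
        rewrite K. unfold shiftn. rewrite Nat.add_0_r. reflexivity. }
    assert (Pt : pt (enc t) = xt).
    { apply code_inj.
      - intro n. rewrite pt_iter. pose proof (pt_Iof (shiftn n (enc t))) as K. apply (Iof_sym _ _ K).
      - auto.
      - rewrite Ct. apply functional_extensionality. intro n. unfold code. rewrite pt_iter.
        pose proof (pt_Iof (shiftn n (enc t))) as K. apply Iof_sym in K. destruct K as [K _].
        rewrite K. unfold shiftn. rewrite Nat.add_0_r. reflexivity. }
    rewrite Ps, Pt in E.
    assert (Exy : xs = xt) by (apply (HG xs xt); [exists s| exists t|]; auto).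
    apply enc_inj. rewrite <- Cs, <- Ct, Exy. reflexivity. }
  split.
  - intros x y [t [Hx Cx]] [t' [Hy Cy]] Hxy. split.
    + assert (Htt : t <> t').
      { intro E. apply Hxy. apply code_inj; auto. rewrite Cx, Cy, E. reflexivity. }
      assert (Hi : exists i, t i <> t' i).
      { apply not_all_ex_not. intro K. apply Htt. apply functional_extensionality. exact K. }
      destruct Hi as [i Hi].
      apply (limsup_pos _ gap gap_pos). intro M.
      set (k := (S i + M)%nat). set (m := (k * k + k + 1 + i)%nat).
      exists (2 * m)%nat. split; [unfold m, k; nia|].
      rewrite !iter_f_double.
      apply sep; try apply Y_inI, Y_iter; auto.
      change (code x m <> code y m). rewrite Cx, Cy. unfold m. rewrite !enc_bit by (unfold k; lia). exact Hi.
    + apply liminf_zero. intros n; apply Rabs_pos.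
      intros eps He M. destruct (close_eps eps He) as [N [_ HN]].
      set (k := (N + M)%nat). exists (2 * (k * k))%nat. split; [unfold k; nia|].
      rewrite !iter_f_double. apply HN; try apply Y_iter; auto.
      intros j Hj. rewrite !code_iter, Cx, Cy. rewrite !enc_zero by (unfold k; lia). reflexivity.
  - intros x p [t [Hx Cx]] Hp [m [Hm Ep]].
    apply (limsup_pos _ (gap / 2)). pose proof gap_pos; lra.
    apply NNPP. intro K.
    apply not_all_ex_not in K. destruct K as [M K].
    assert (K' : forall n, (M <= n)%nat -> Rabs (iter f n x - iter f n p) < gap / 2).
    { intros n Hn. apply Rnot_le_lt. intro L. apply K. exists n. split; auto. }
    assert (Pp : forall n, iter f (n + 2 * m) p = iter f n p).
    { intro n. rewrite iter_add. f_equal. replace (2 * m)%nat with (m + m)%nat by lia.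
      rewrite iter_add, !Ep. reflexivity. }
    apply (enc_not_evper t m M Hm). intros j Hj.
    rewrite <- Cx. unfold code. apply same_sym; try apply Y_inI, Y_iter; auto.
    rewrite <- !iter_f_double.
    pose proof (K' (2 * j)%nat ltac:(lia)) as K1.
    pose proof (K' (2 * j + 2 * m)%nat ltac:(lia)) as K2.
    rewrite Pp in K2. replace (2 * (j + m))%nat with (2 * j + 2 * m)%nat by lia.
    apply Rabs_def2 in K1. apply Rabs_def2 in K2. apply Rabs_def1; lra.
Qed.

Definition YD (x : R) : Prop := Yset x \/ image_dir f Yset x.

Lemma YD_rep : forall x, YD x -> exists x' i, Yset x' /\ (i <= 1)%nat /\ x = iter f i x'.
Proof.
  intros x [H|[y [E H]]]. exists x, O. auto. exists y, 1%nat. auto.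
Qed.

Lemma YD_in : forall x' i, Yset x' -> (i <= 1)%nat -> YD (iter f i x').
Proof.
  intros x' i H Hi. destruct i as [|[|]]; [left; auto| right; exists x'; auto| lia].
Qed.

Lemma iter_comm : forall n i x, iter f n (iter f i x) = iter f i (iter f n x).
Proof. intros. rewrite <- !iter_add, Nat.add_comm. reflexivity. Qed.

Theorem D_thm : D_chaotic f (fun x => A <= x <= B).
Proof.
  exists YD. split.
  { destruct (exists_code (fun _ => true)) as [y [Hy _]]. exists y. left; auto. }
  split.
  { intros y [H|[z [E H]]]. apply Y_X; auto. subst. apply HXinv, Y_X; auto. }
  split.
  { apply (compact_P4 (fun c => A <= c <= B)). apply compact_P3.
    apply closed_union. apply Y_closed. apply compact_P2. apply continuity_compact; auto. apply Y_compact.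
    intros y [H|[z [E H]]]. apply Y_X; auto. subst. apply HXinv, Y_X; auto. }
  split.
  { intros y [H|[z [E H]]]. right. exists y. auto. left. subst. apply Y_gg. auto. }
  split.
  { intros x y eps Hx Hy He.
    destruct (YD_rep x Hx) as [x' [i [Hx' [Hi Ex]]]].
    destruct (YD_rep y Hy) as [y' [j [Hy' [Hj Ey]]]].
    destruct (cont_eps (iter f i) x' (iter_cont f fcont i x') eps He) as [d [Hd Kd]].
    destruct (close_eps d Hd) as [N [HN KN]].
    set (s := fun k => if (k <? N)%nat then code x' k else code y' (k - N)%nat).
    destruct (exists_code s) as [z' [Hz' Cz']].
    assert (Ez : iter gg N z' = y').
    { apply code_inj; auto. apply Y_iter; auto. apply functional_extensionality. intro k.
      rewrite code_iter, Cz'. unfold s. destruct (Nat.ltb_spec (N + k) N); [lia|]. f_equal. lia. }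
    exists (iter f i z'), (2 * N + j - i)%nat. split; [apply YD_in; auto|]. split; [lia|]. split.
    - rewrite Ex. apply Kd. apply KN; auto. intros k Hk. rewrite Cz'. unfold s.
      destruct (Nat.ltb_spec k N); [reflexivity| lia].
    - rewrite <- iter_add. replace (2 * N + j - i + i)%nat with (j + 2 * N)%nat by lia.
      rewrite iter_add, iter_f_double, Ez, <- Ey. unfold Rminus. rewrite Rplus_opp_r, Rabs_R0. auto. }
  split.
  { intros x eps Hx He.
    destruct (YD_rep x Hx) as [x' [i [Hx' [Hi Ex]]]].
    destruct (cont_eps (iter f i) x' (iter_cont f fcont i x') eps He) as [d [Hd Kd]].
    destruct (close_eps d Hd) as [N [HN KN]].
    set (s := fun k => code x' (k mod N)).
    destruct (exists_code s) as [z' [Hz' Cz']].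
    assert (Ez : iter gg N z' = z').
    { apply code_inj; auto. apply Y_iter; auto. apply functional_extensionality. intro k.
      rewrite code_iter, Cz'. unfold s. f_equal. replace (N + k)%nat with (k + 1 * N)%nat by lia.
      apply Nat.Div0.mod_add. }
    exists (iter f i z'). split; [apply YD_in; auto|]. split.
    - exists (2 * N)%nat. split; [lia|]. rewrite iter_comm, iter_f_double, Ez. reflexivity.
    - rewrite Ex. apply Kd. apply KN; auto. intros k Hk. rewrite Cz'. unfold s. rewrite Nat.mod_small; auto. }
  exists (gap / 2). split; [pose proof gap_pos; lra|].
  intros x eps Hx He.
  destruct (YD_rep x Hx) as [x' [i [Hx' [Hi Ex]]]].
  destruct (cont_eps (iter f i) x' (iter_cont f fcont i x') eps He) as [d [Hd Kd]].
  destruct (close_eps d Hd) as [N [HN KN]].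
  set (s := fun k => if (k =? N)%nat then negb (code x' N) else code x' k).
  destruct (exists_code s) as [y' [Hy' Cy']].
  exists (iter f i y'), (2 * N - i)%nat. split; [apply YD_in; auto|]. split.
  - rewrite Ex. apply Kd. apply KN; auto. intros k Hk. rewrite Cy'. unfold s.
    destruct (Nat.eqb_spec k N); [lia| reflexivity].
  - rewrite Ex, <- !iter_add. replace (2 * N - i + i)%nat with (2 * N)%nat by lia.
    rewrite !iter_f_double.
    assert (gap <= Rabs (iter gg N x' - iter gg N y')).
    { apply sep; try apply Y_inI, Y_iter; auto.
      change (code x' N <> code y' N). rewrite Cy'. unfold s. rewrite Nat.eqb_refl.
      destruct (code x' N); discriminate. }
    pose proof gap_pos. lra.
Qed.

End HS.


Lemma eb0 : (4555297/2500000) <= exp ((13/5) - (2)).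
Proof. apply (exp_pos_lb ((13/5) - (2)) (3/10) 2 (8436617547/6250000000)); expnum. Qed.

Lemma eb1 : exp ((521/200) - (2)) <= (18312523/10000000).
Proof. apply (exp_pos_ub ((521/200) - (2)) (121/400) 2 (738968488257/1000000000000)); expnum. Qed.

Lemma eb2 : (88706251/10000000000) <= exp ((13/5) - (732501/100000)).
Proof. apply (exp_neg_lb ((13/5) - (732501/100000)) (472501/1000000) 10 (623441090529/1000000000000)); expnum. Qed.

Lemma eb3 : exp ((521/200) - (728847/100000)) <= (92468717/10000000000).
Proof. apply (exp_neg_ub ((521/200) - (728847/100000)) (468347/1000000) 10 (159735158439/100000000000)); expnum. Qed.

Lemma eb4 : (83648633/10000000) <= exp ((13/5) - (11899/25000)).
Proof. apply (exp_pos_lb ((13/5) - (11899/25000)) (53101/125000) 5 (152929676519/100000000000)); expnum. Qed.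

Lemma eb5 : exp ((521/200) - (491211/1000000)) <= (20698883/2500000).
Proof. apply (exp_pos_ub ((521/200) - (491211/1000000)) (2113789/5000000) 5 (655237312323/1000000000000)); expnum. Qed.

Lemma eb6 : (41191293/5000000) <= exp ((13/5) - (491211/1000000)).
Proof. apply (exp_pos_lb ((13/5) - (491211/1000000)) (2108789/5000000) 5 (19057990139/12500000000)); expnum. Qed.

Lemma eb7 : (30119421/100000000) <= exp ((13/5) - (19/5)).
Proof. apply (exp_neg_lb ((13/5) - (19/5)) (2/5) 3 (670320046007/1000000000000)); expnum. Qed.

Lemma eb8 : exp ((521/200) - (19/5)) <= (7567599/25000000).
Proof. apply (exp_neg_ub ((521/200) - (19/5)) (239/600) 3 (37233509831/25000000000)); expnum. Qed.

Lemma eb9 : (17015423/100000000) <= exp ((13/5) - (87421/20000)).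
Proof. apply (exp_neg_lb ((13/5) - (87421/20000)) (35421/80000) 4 (642259725583/1000000000000)); expnum. Qed.

Lemma eb10 : exp ((521/200) - (108731/25000)) <= (8738889/50000000).
Proof. apply (exp_neg_ub ((521/200) - (108731/25000)) (21803/50000) 4 (154660158641/100000000000)); expnum. Qed.

Lemma eb11 : (2329683/20000000) <= exp ((13/5) - (19/4)).
Proof. apply (exp_neg_lb ((13/5) - (19/4)) (43/100) 5 (325254547333/500000000000)); expnum. Qed.

Lemma eb12 : exp ((521/200) - (19/4)) <= (2926701/25000000).
Proof. apply (exp_neg_ub ((521/200) - (19/4)) (429/1000) 5 (76786051649/50000000000)); expnum. Qed.

Lemma eb13 : (23987331/25000000) <= exp ((13/5) - (52827/20000)).
Proof. apply (exp_neg_lb ((13/5) - (52827/20000)) (827/20000) 1 (479746624267/500000000000)); expnum. Qed.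

Lemma eb14 : exp ((521/200) - (262817/100000)) <= (97709637/100000000).
Proof. apply (exp_neg_ub ((521/200) - (262817/100000)) (2317/100000) 1 (25586012741/25000000000)); expnum. Qed.

Lemma eb15 : (22524601/500000000) <= exp ((13/5) - (57/10)).
Proof. apply (exp_neg_lb ((13/5) - (57/10)) (31/70) 7 (160549735791/250000000000)); expnum. Qed.

Lemma eb16 : exp ((521/200) - (57/10)) <= (45275013/1000000000).
Proof. apply (exp_neg_ub ((521/200) - (57/10)) (619/1400) 7 (19450475173/12500000000)); expnum. Qed.

Lemma eb17 : (7788519/2500000) <= exp ((13/5) - (36591/25000)).
Proof. apply (exp_pos_lb ((13/5) - (36591/25000)) (28409/75000) 3 (146051142627/100000000000)); expnum. Qed.

Lemma eb18 : exp ((521/200) - (147099/100000)) <= (31080951/10000000).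
Proof. apply (exp_pos_ub ((521/200) - (147099/100000)) (113401/300000) 3 (85653527069/125000000000)); expnum. Qed.

Lemma eb19 : (8711187/500000000) <= exp ((13/5) - (133/20)).
Proof. apply (exp_neg_lb ((13/5) - (133/20)) (9/20) 9 (637628151531/1000000000000)); expnum. Qed.

Lemma eb20 : exp ((521/200) - (133/20)) <= (3501941/200000000).
Proof. apply (exp_neg_ub ((521/200) - (133/20)) (809/1800) 9 (39186028519/25000000000)); expnum. Qed.

Lemma eb21 : (15577549/2500000) <= exp ((13/5) - (38523/50000)).
Proof. apply (exp_pos_lb ((13/5) - (38523/50000)) (91477/200000) 4 (3949842601/2500000000)); expnum. Qed.

Lemma eb22 : exp ((521/200) - (774323/1000000)) <= (12476217/2000000).
Proof. apply (exp_pos_ub ((521/200) - (774323/1000000)) (1830677/4000000) 4 (632756725781/1000000000000)); expnum. Qed.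

Lemma eb23 : (18730817/100000000) <= exp ((13/5) - (171/40)).
Proof. apply (exp_neg_lb ((13/5) - (171/40)) (67/160) 4 (657868641827/1000000000000)); expnum. Qed.

Lemma eb24 : exp ((521/200) - (171/40)) <= (18824707/100000000).
Proof. apply (exp_neg_ub ((521/200) - (171/40)) (167/400) 4 (151816140279/100000000000)); expnum. Qed.

Lemma eb25 : (5394547/12500000) <= exp ((13/5) - (172017/50000)).
Proof. apply (exp_neg_lb ((13/5) - (172017/50000)) (42017/100000) 2 (656935131303/1000000000000)); expnum. Qed.

Lemma eb26 : (3694613/25000000) <= exp ((13/5) - (564/125)).
Proof. apply (exp_neg_lb ((13/5) - (564/125)) (239/500) 4 (620022196817/1000000000000)); expnum. Qed.

Lemma eb27 : exp ((521/200) - (564/125)) <= (1485253/10000000).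
Proof. apply (exp_neg_ub ((521/200) - (564/125)) (1907/4000) 4 (32216613647/20000000000)); expnum. Qed.

Lemma eb28 : (65462023/100000000) <= exp ((13/5) - (30237/10000)).
Proof. apply (exp_neg_lb ((13/5) - (30237/10000)) (4237/10000) 1 (26184809539/40000000000)); expnum. Qed.

Lemma eb29 : (30925933/10000000) <= exp ((13/5) - (147099/100000)).
Proof. apply (exp_pos_lb ((13/5) - (147099/100000)) (112901/300000) 3 (36423438827/25000000000)); expnum. Qed.

Lemma eb30 : (1120617/40000000) <= exp ((13/5) - (247/40)).
Proof. apply (exp_neg_lb ((13/5) - (247/40)) (143/320) 8 (25584954247/40000000000)); expnum. Qed.

Lemma eb31 : exp ((521/200) - (247/40)) <= (14077927/500000000).
Proof. apply (exp_neg_ub ((521/200) - (247/40)) (357/800) 8 (156244202619/100000000000)); expnum. Qed.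

Lemma eb32 : (5751919/1250000) <= exp ((13/5) - (107361/100000)).
Proof. apply (exp_pos_lb ((13/5) - (107361/100000)) (152639/400000) 4 (18307780693/12500000000)); expnum. Qed.

Lemma eb33 : (9156261/5000000) <= exp ((521/200) - (2)).
Proof. apply (exp_pos_lb ((521/200) - (2)) (121/400) 2 (33830941909/25000000000)); expnum. Qed.

Lemma eb34 : exp ((131/50) - (2)) <= (18589281/10000000).
Proof. apply (exp_pos_ub ((131/50) - (2)) (31/100) 2 (366723478111/500000000000)); expnum. Qed.

Lemma eb35 : (7980773/1000000000) <= exp ((521/200) - (185893/25000)).
Proof. apply (exp_neg_lb ((521/200) - (185893/25000)) (7548/15625) 10 (308442702921/500000000000)); expnum. Qed.

Lemma eb36 : exp ((131/50) - (293/40)) <= (18099829/2000000000).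
Proof. apply (exp_neg_ub ((131/50) - (293/40)) (941/2000) 10 (160079438707/100000000000)); expnum. Qed.

Lemma eb37 : (10879579/1250000) <= exp ((521/200) - (55157/125000)).
Proof. apply (exp_pos_lb ((521/200) - (55157/125000)) (67617/156250) 5 (3082977897/2000000000)); expnum. Qed.

Lemma eb38 : exp ((131/50) - (485579/1000000)) <= (84521513/10000000).
Proof. apply (exp_pos_ub ((131/50) - (485579/1000000)) (2134421/5000000) 5 (163134777957/250000000000)); expnum. Qed.

Lemma eb39 : (83263151/10000000) <= exp ((521/200) - (485579/1000000)).
Proof. apply (exp_pos_lb ((521/200) - (485579/1000000)) (2119421/5000000) 5 (76394232661/50000000000)); expnum. Qed.

Lemma eb40 : (2879409/10000000) <= exp ((521/200) - (77/20)).
Proof. apply (exp_neg_lb ((521/200) - (77/20)) (83/200) 3 (82542535083/125000000000)); expnum. Qed.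

Lemma eb41 : exp ((131/50) - (77/20)) <= (14614629/50000000).
Proof. apply (exp_neg_ub ((131/50) - (77/20)) (41/100) 3 (150681778417/100000000000)); expnum. Qed.

Lemma eb42 : (17772639/100000000) <= exp ((521/200) - (433251/100000)).
Proof. apply (exp_neg_lb ((521/200) - (433251/100000)) (172751/400000) 4 (129857781929/200000000000)); expnum. Qed.

Lemma eb43 : exp ((131/50) - (1067/250)) <= (240543/1250000).
Proof. apply (exp_neg_ub ((131/50) - (1067/250)) (103/250) 4 (75491721767/50000000000)); expnum. Qed.

Lemma eb44 : (695991/6250000) <= exp ((521/200) - (24/5)).
Proof. apply (exp_neg_lb ((521/200) - (24/5)) (439/1000) 5 (644680779559/1000000000000)); expnum. Qed.

Lemma eb45 : exp ((131/50) - (24/5)) <= (5652077/50000000).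
Proof. apply (exp_neg_ub ((131/50) - (24/5)) (109/250) 5 (15465087931/10000000000)); expnum. Qed.

Lemma eb46 : (10005201/10000000) <= exp ((521/200) - (8139/3125)).
Proof. apply (exp_pos_lb ((521/200) - (8139/3125)) (13/25000) 1 (50026006761/50000000000)); expnum. Qed.

Lemma eb47 : exp ((131/50) - (25657/10000)) <= (10558013/10000000).
Proof. apply (exp_pos_ub ((131/50) - (25657/10000)) (543/10000) 1 (1894295839/2000000000)); expnum. Qed.

Lemma eb48 : (11318753/250000000) <= exp ((521/200) - (57/10)).
Proof. apply (exp_neg_lb ((521/200) - (57/10)) (619/1400) 7 (642657820561/1000000000000)); expnum. Qed.

Lemma eb49 : exp ((131/50) - (57/10)) <= (22979629/500000000).
Proof. apply (exp_neg_ub ((131/50) - (57/10)) (11/25) 7 (19408840209/12500000000)); expnum. Qed.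

Lemma eb50 : (1554063/500000) <= exp ((521/200) - (73549/50000)).
Proof. apply (exp_pos_lb ((521/200) - (73549/50000)) (56701/150000) 3 (72968633577/50000000000)); expnum. Qed.

Lemma eb51 : exp ((131/50) - (74661/50000)) <= (15428523/5000000).
Proof. apply (exp_pos_ub ((131/50) - (74661/50000)) (56339/150000) 3 (686881608091/1000000000000)); expnum. Qed.

Lemma eb52 : (8327873/500000000) <= exp ((521/200) - (67/10)).
Proof. apply (exp_neg_lb ((521/200) - (67/10)) (91/200) 9 (634447967847/1000000000000)); expnum. Qed.

Lemma eb53 : exp ((131/50) - (67/10)) <= (8453733/500000000).
Proof. apply (exp_neg_ub ((131/50) - (67/10)) (34/75) 9 (157354861297/100000000000)); expnum. Qed.

Lemma eb54 : (64065697/10000000) <= exp ((521/200) - (186919/250000)).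
Proof. apply (exp_pos_lb ((521/200) - (186919/250000)) (464331/1000000) 4 (159094948467/100000000000)); expnum. Qed.

Lemma eb55 : exp ((131/50) - (758977/1000000)) <= (64303117/10000000).
Proof. apply (exp_pos_ub ((131/50) - (758977/1000000)) (1861023/4000000) 4 (627974480051/1000000000000)); expnum. Qed.

Lemma eb56 : (8953307/50000000) <= exp ((521/200) - (173/40)).
Proof. apply (exp_neg_lb ((521/200) - (173/40)) (43/100) 4 (325254547333/500000000000)); expnum. Qed.

Lemma eb57 : exp ((131/50) - (173/40)) <= (18177239/100000000).
Proof. apply (exp_neg_ub ((131/50) - (173/40)) (341/800) 4 (19143795023/12500000000)); expnum. Qed.

Lemma eb58 : (45150447/100000000) <= exp ((521/200) - (340017/100000)).
Proof. apply (exp_neg_lb ((521/200) - (340017/100000)) (79517/200000) 2 (671940825223/1000000000000)); expnum. Qed.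

Lemma eb59 : (14128163/100000000) <= exp ((521/200) - (2281/500)).
Proof. apply (exp_neg_lb ((521/200) - (2281/500)) (1957/4000) 4 (613086036117/1000000000000)); expnum. Qed.

Lemma eb60 : exp ((131/50) - (2281/500)) <= (3585421/25000000).
Proof. apply (exp_neg_ub ((131/50) - (2281/500)) (971/2000) 4 (81249364753/50000000000)); expnum. Qed.

Lemma eb61 : (68401871/100000000) <= exp ((521/200) - (298477/100000)).
Proof. apply (exp_neg_lb ((521/200) - (298477/100000)) (37977/100000) 1 (684018715409/1000000000000)); expnum. Qed.

Lemma eb62 : (30397643/10000000) <= exp ((521/200) - (74661/50000)).
Proof. apply (exp_pos_lb ((521/200) - (74661/50000)) (55589/150000) 3 (144859385837/100000000000)); expnum. Qed.

Lemma eb63 : (27460683/1000000000) <= exp ((521/200) - (31/5)).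
Proof. apply (exp_neg_lb ((521/200) - (31/5)) (719/1600) 8 (63802679369/100000000000)); expnum. Qed.

Lemma eb64 : exp ((131/50) - (31/5)) <= (27875699/1000000000).
Proof. apply (exp_neg_ub ((131/50) - (31/5)) (179/400) 8 (4888738437/3125000000)); expnum. Qed.

Lemma eb65 : (4634137/1000000) <= exp ((521/200) - (21431/20000)).
Proof. apply (exp_pos_lb ((521/200) - (21431/20000)) (30669/80000) 4 (146720979671/100000000000)); expnum. Qed.

Lemma eb66 : (116183/62500) <= exp ((131/50) - (2)).
Proof. apply (exp_pos_lb ((131/50) - (2)) (31/100) 2 (27268502281/20000000000)); expnum. Qed.

Lemma eb67 : exp ((267/100) - (2)) <= (9771187/5000000).
Proof. apply (exp_pos_ub ((267/100) - (2)) (67/200) 2 (715338086347/1000000000000)); expnum. Qed.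

Lemma eb68 : (13833539/2500000000) <= exp ((131/50) - (156339/20000)).
Proof. apply (exp_neg_lb ((131/50) - (156339/20000)) (9449/20000) 11 (155868221709/250000000000)); expnum. Qed.

Lemma eb69 : exp ((267/100) - (743571/100000)) <= (42584197/5000000000).
Proof. apply (exp_neg_ub ((267/100) - (743571/100000)) (476571/1000000) 10 (40263559237/25000000000)); expnum. Qed.

Lemma eb70 : (97951071/10000000) <= exp ((131/50) - (338117/1000000)).
Proof. apply (exp_pos_lb ((131/50) - (338117/1000000)) (2281883/5000000) 5 (19729307937/12500000000)); expnum. Qed.

Lemma eb71 : exp ((267/100) - (94179/200000)) <= (45084699/5000000).
Proof. apply (exp_pos_ub ((267/100) - (94179/200000)) (439821/1000000) 5 (644151713849/1000000000000)); expnum. Qed.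

Lemma eb72 : (85771783/10000000) <= exp ((131/50) - (94179/200000)).
Proof. apply (exp_pos_lb ((131/50) - (94179/200000)) (429821/1000000) 5 (153698237763/100000000000)); expnum. Qed.

Lemma eb73 : (4462587/12500000) <= exp ((131/50) - (73/20)).
Proof. apply (exp_neg_lb ((131/50) - (73/20)) (103/300) 3 (709401704903/1000000000000)); expnum. Qed.

Lemma eb74 : exp ((267/100) - (73/20)) <= (37531111/100000000).
Proof. apply (exp_neg_ub ((267/100) - (73/20)) (49/100) 2 (163231621523/100000000000)); expnum. Qed.

Lemma eb75 : (11567781/125000000) <= exp ((131/50) - (500009/100000)).
Proof. apply (exp_neg_lb ((131/50) - (500009/100000)) (238009/500000) 5 (621252299447/1000000000000)); expnum. Qed.

Lemma eb76 : exp ((267/100) - (237811/50000)) <= (3103889/25000000).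
Proof. apply (exp_neg_ub ((267/100) - (237811/50000)) (104311/250000) 5 (151777280321/100000000000)); expnum. Qed.

Lemma eb77 : (511421/5000000) <= exp ((131/50) - (49/10)).
Proof. apply (exp_neg_lb ((131/50) - (49/10)) (57/125) 5 (126762767399/200000000000)); expnum. Qed.

Lemma eb78 : exp ((267/100) - (49/10)) <= (2688211/25000000).
Proof. apply (exp_neg_ub ((267/100) - (49/10)) (223/500) 5 (39051286613/25000000000)); expnum. Qed.

Lemma eb79 : (2077961/2000000) <= exp ((131/50) - (8068/3125)).
Proof. apply (exp_pos_lb ((131/50) - (8068/3125)) (239/6250) 1 (103898055829/100000000000)); expnum. Qed.

Lemma eb80 : exp ((267/100) - (15349/6250)) <= (12388209/10000000).
Proof. apply (exp_pos_ub ((267/100) - (15349/6250)) (2677/12500) 1 (403609609807/500000000000)); expnum. Qed.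

Lemma eb81 : (5744907/125000000) <= exp ((131/50) - (57/10)).
Proof. apply (exp_neg_lb ((131/50) - (57/10)) (11/25) 7 (644036421011/1000000000000)); expnum. Qed.

Lemma eb82 : exp ((267/100) - (57/10)) <= (48315639/1000000000).
Proof. apply (exp_neg_ub ((267/100) - (57/10)) (303/700) 7 (77082798343/50000000000)); expnum. Qed.

Lemma eb83 : (30857353/10000000) <= exp ((131/50) - (149321/100000)).
Proof. apply (exp_pos_lb ((131/50) - (149321/100000)) (112679/300000) 3 (145585981811/100000000000)); expnum. Qed.

Lemma eb84 : exp ((267/100) - (78489/50000)) <= (30048271/10000000).
Proof. apply (exp_pos_ub ((267/100) - (78489/50000)) (18337/50000) 3 (692989798959/1000000000000)); expnum. Qed.

Lemma eb85 : (1455239/100000000) <= exp ((131/50) - (137/20)).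
Proof. apply (exp_neg_lb ((131/50) - (137/20)) (47/100) 9 (625002268143/1000000000000)); expnum. Qed.

Lemma eb86 : exp ((267/100) - (137/20)) <= (3824627/250000000).
Proof. apply (exp_neg_ub ((267/100) - (137/20)) (209/450) 9 (159112997929/100000000000)); expnum. Qed.

Lemma eb87 : (69390577/10000000) <= exp ((131/50) - (341417/500000)).
Proof. apply (exp_pos_lb ((131/50) - (341417/500000)) (968583/2000000) 4 (32460493683/20000000000)); expnum. Qed.

Lemma eb88 : exp ((267/100) - (143569/200000)) <= (17609627/2500000).
Proof. apply (exp_pos_ub ((267/100) - (143569/200000)) (390431/800000) 4 (306914543251/500000000000)); expnum. Qed.

Lemma eb89 : (3821841/20000000) <= exp ((131/50) - (171/40)).
Proof. apply (exp_neg_lb ((131/50) - (171/40)) (331/800) 4 (330583111061/500000000000)); expnum. Qed.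

Lemma eb90 : (104529/400000) <= exp ((131/50) - (1981/500)).
Proof. apply (exp_neg_lb ((131/50) - (1981/500)) (671/1500) 3 (639330762413/1000000000000)); expnum. Qed.

Lemma eb91 : exp ((267/100) - (1981/500)) <= (343401/1250000).
Proof. apply (exp_neg_ub ((267/100) - (1981/500)) (323/750) 3 (153828270211/100000000000)); expnum. Qed.

Lemma eb92 : (2300919/12500000) <= exp ((131/50) - (215621/50000)).
Proof. apply (exp_neg_lb ((131/50) - (215621/50000)) (84621/200000) 4 (655009853417/1000000000000)); expnum. Qed.

Lemma eb93 : exp ((267/100) - (171/40)) <= (5022239/25000000).
Proof. apply (exp_neg_ub ((267/100) - (171/40)) (321/800) 4 (149369064371/100000000000)); expnum. Qed.

Lemma eb94 : (34945167/100000000) <= exp ((131/50) - (367139/100000)).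
Proof. apply (exp_neg_lb ((131/50) - (367139/100000)) (105139/300000) 3 (352180829929/500000000000)); expnum. Qed.

Lemma eb95 : (3493401/25000000) <= exp ((131/50) - (1147/250)).
Proof. apply (exp_neg_lb ((131/50) - (1147/250)) (123/250) 4 (611402365613/1000000000000)); expnum. Qed.

Lemma eb96 : exp ((267/100) - (1147/250)) <= (57383/390625).
Proof. apply (exp_neg_ub ((267/100) - (1147/250)) (959/2000) 4 (40381664077/25000000000)); expnum. Qed.

Lemma eb97 : (6236163/10000000) <= exp ((131/50) - (154611/50000)).
Proof. apply (exp_neg_lb ((131/50) - (154611/50000)) (23611/50000) 1 (155904075523/250000000000)); expnum. Qed.

Lemma eb98 : (5977623/50000000) <= exp ((131/50) - (593/125)).
Proof. apply (exp_neg_lb ((131/50) - (593/125)) (531/1250) 5 (40868784507/62500000000)); expnum. Qed.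

Lemma eb99 : exp ((267/100) - (593/125)) <= (2513641/20000000).
Proof. apply (exp_neg_ub ((267/100) - (593/125)) (1037/2500) 5 (75703394789/50000000000)); expnum. Qed.

Lemma eb100 : (20294011/25000000) <= exp ((131/50) - (56571/20000)).
Proof. apply (exp_neg_lb ((131/50) - (56571/20000)) (4171/20000) 1 (162352089133/200000000000)); expnum. Qed.

Lemma eb101 : (14291399/5000000) <= exp ((131/50) - (78489/50000)).
Proof. apply (exp_pos_lb ((131/50) - (78489/50000)) (52511/150000) 3 (141917161713/100000000000)); expnum. Qed.

Lemma eb102 : (25861497/1000000000) <= exp ((131/50) - (251/40)).
Proof. apply (exp_neg_lb ((131/50) - (251/40)) (731/1600) 8 (633259492447/1000000000000)); expnum. Qed.

Lemma eb103 : exp ((267/100) - (251/40)) <= (13593723/500000000).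
Proof. apply (exp_neg_ub ((267/100) - (251/40)) (721/1600) 8 (156929268477/100000000000)); expnum. Qed.

Lemma eb104 : (47089737/10000000) <= exp ((131/50) - (107053/100000)).
Proof. apply (exp_pos_lb ((131/50) - (107053/100000)) (154947/400000) 4 (147309775467/100000000000)); expnum. Qed.

Lemma eb105 : (19542373/10000000) <= exp ((267/100) - (2)).
Proof. apply (exp_pos_lb ((267/100) - (2)) (67/200) 2 (139794038507/100000000000)); expnum. Qed.

Lemma eb106 : exp ((277/100) - (2)) <= (21597663/10000000).
Proof. apply (exp_pos_ub ((277/100) - (2)) (77/200) 2 (136090127237/200000000000)); expnum. Qed.

Lemma eb107 : (25566179/10000000000) <= exp ((267/100) - (863907/100000)).
Proof. apply (exp_neg_lb ((267/100) - (863907/100000)) (198969/400000) 12 (7601200109/12500000000)); expnum. Qed.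

Lemma eb108 : exp ((277/100) - (390847/50000)) <= (32144881/5000000000).
Proof. apply (exp_neg_ub ((277/100) - (390847/50000)) (252347/550000) 11 (158219437057/100000000000)); expnum. Qed.

Lemma eb109 : (11931607/1000000) <= exp ((267/100) - (190809/1000000)).
Proof. apply (exp_pos_lb ((267/100) - (190809/1000000)) (2479191/5000000) 5 (41046846897/25000000000)); expnum. Qed.

Lemma eb110 : exp ((277/100) - (9821/25000)) <= (10774261/1000000).
Proof. apply (exp_pos_ub ((277/100) - (9821/25000)) (59429/125000) 5 (124323291997/200000000000)); expnum. Qed.

Lemma eb111 : (97489539/10000000) <= exp ((267/100) - (9821/25000)).
Proof. apply (exp_pos_lb ((267/100) - (9821/25000)) (56929/125000) 5 (157685443459/100000000000)); expnum. Qed.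

Lemma eb112 : (1292133/4000000) <= exp ((267/100) - (19/5)).
Proof. apply (exp_neg_lb ((267/100) - (19/5)) (113/300) 3 (343072375341/500000000000)); expnum. Qed.

Lemma eb113 : exp ((277/100) - (19/5)) <= (35700697/100000000).
Proof. apply (exp_neg_ub ((277/100) - (19/5)) (103/300) 3 (28192771259/20000000000)); expnum. Qed.

Lemma eb114 : (83309723/1000000000) <= exp ((267/100) - (515519/100000)).
Proof. apply (exp_neg_lb ((267/100) - (515519/100000)) (248519/500000) 5 (304164933297/500000000000)); expnum. Qed.

Lemma eb115 : exp ((277/100) - (23323/5000)) <= (1879731/12500000).
Proof. apply (exp_neg_ub ((277/100) - (23323/5000)) (9473/20000) 4 (160584483949/100000000000)); expnum. Qed.

Lemma eb116 : (48647873/500000000) <= exp ((267/100) - (5)).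
Proof. apply (exp_neg_lb ((267/100) - (5)) (233/500) 5 (627507283919/1000000000000)); expnum. Qed.

Lemma eb117 : exp ((277/100) - (5)) <= (2688211/25000000).
Proof. apply (exp_neg_ub ((277/100) - (5)) (223/500) 5 (39051286613/25000000000)); expnum. Qed.

Lemma eb118 : (49097249/50000000) <= exp ((267/100) - (134411/50000)).
Proof. apply (exp_neg_lb ((267/100) - (134411/50000)) (911/50000) 1 (981944980697/1000000000000)); expnum. Qed.

Lemma eb119 : exp ((277/100) - (243239/100000)) <= (7007969/5000000).
Proof. apply (exp_pos_ub ((277/100) - (243239/100000)) (33761/100000) 1 (7134734883/10000000000)); expnum. Qed.

Lemma eb120 : (43717797/1000000000) <= exp ((267/100) - (29/5)).
Proof. apply (exp_neg_lb ((267/100) - (29/5)) (313/700) 7 (6394525513/10000000000)); expnum. Qed.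

Lemma eb121 : exp ((277/100) - (29/5)) <= (48315639/1000000000).
Proof. apply (exp_neg_ub ((277/100) - (29/5)) (303/700) 7 (77082798343/50000000000)); expnum. Qed.

Lemma eb122 : (33179263/10000000) <= exp ((267/100) - (73533/50000)).
Proof. apply (exp_pos_lb ((267/100) - (73533/50000)) (19989/50000) 3 (29829930631/20000000000)); expnum. Qed.

Lemma eb123 : exp ((277/100) - (81267/50000)) <= (7853433/2500000).
Proof. apply (exp_pos_ub ((277/100) - (81267/50000)) (57233/150000) 3 (682799969071/1000000000000)); expnum. Qed.

Lemma eb124 : (6262679/500000000) <= exp ((267/100) - (141/20)).
Proof. apply (exp_neg_lb ((267/100) - (141/20)) (73/150) 9 (614671889233/1000000000000)); expnum. Qed.

Lemma eb125 : exp ((277/100) - (141/20)) <= (13842663/1000000000).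
Proof. apply (exp_neg_ub ((277/100) - (141/20)) (107/225) 9 (16089077833/10000000000)); expnum. Qed.

Lemma eb126 : (77481879/10000000) <= exp ((267/100) - (622541/1000000)).
Proof. apply (exp_pos_lb ((267/100) - (622541/1000000)) (2047459/5000000) 5 (150605221393/100000000000)); expnum. Qed.

Lemma eb127 : exp ((277/100) - (137603/200000)) <= (10025467/1250000).
Proof. apply (exp_pos_ub ((277/100) - (137603/200000)) (416397/1000000) 5 (329709214677/500000000000)); expnum. Qed.

Lemma eb128 : (443211/2500000) <= exp ((267/100) - (22/5)).
Proof. apply (exp_neg_lb ((267/100) - (22/5)) (173/400) 4 (648884853073/1000000000000)); expnum. Qed.

Lemma eb129 : (5982723/25000000) <= exp ((267/100) - (41/10)).
Proof. apply (exp_neg_lb ((267/100) - (41/10)) (143/300) 3 (31042472223/50000000000)); expnum. Qed.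

Lemma eb130 : exp ((277/100) - (41/10)) <= (26447727/100000000).
Proof. apply (exp_neg_ub ((277/100) - (41/10)) (133/300) 3 (155789154307/100000000000)); expnum. Qed.

Lemma eb131 : (8466803/50000000) <= exp ((267/100) - (444587/100000)).
Proof. apply (exp_neg_lb ((267/100) - (444587/100000)) (177587/400000) 4 (641486268713/1000000000000)); expnum. Qed.

Lemma eb132 : exp ((277/100) - (22/5)) <= (9796479/50000000).
Proof. apply (exp_neg_ub ((277/100) - (22/5)) (163/400) 4 (9394096529/6250000000)); expnum. Qed.

Lemma eb133 : (4065467/12500000) <= exp ((267/100) - (9483/2500)).
Proof. apply (exp_neg_lb ((267/100) - (9483/2500)) (234/625) 3 (8596272201/12500000000)); expnum. Qed.

Lemma eb134 : (820847/6250000) <= exp ((267/100) - (47/10)).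
Proof. apply (exp_neg_lb ((267/100) - (47/10)) (203/500) 5 (20822192731/31250000000)); expnum. Qed.

Lemma eb135 : exp ((277/100) - (47/10)) <= (725741/5000000).
Proof. apply (exp_neg_ub ((277/100) - (47/10)) (193/400) 4 (162011963853/100000000000)); expnum. Qed.

Lemma eb136 : (29244543/50000000) <= exp ((267/100) - (320633/100000)).
Proof. apply (exp_neg_lb ((267/100) - (320633/100000)) (53633/200000) 2 (76478158173/100000000000)); expnum. Qed.

Lemma eb137 : (11304153/100000000) <= exp ((267/100) - (97/20)).
Proof. apply (exp_neg_lb ((267/100) - (97/20)) (109/250) 5 (646617725869/1000000000000)); expnum. Qed.

Lemma eb138 : exp ((277/100) - (97/20)) <= (6246511/50000000).
Proof. apply (exp_neg_ub ((277/100) - (97/20)) (52/125) 5 (151588586779/100000000000)); expnum. Qed.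

Lemma eb139 : (38219391/50000000) <= exp ((267/100) - (73467/25000)).
Proof. apply (exp_neg_lb ((267/100) - (73467/25000)) (6717/25000) 1 (764387820617/1000000000000)); expnum. Qed.

Lemma eb140 : (28424319/10000000) <= exp ((267/100) - (81267/50000)).
Proof. apply (exp_pos_lb ((267/100) - (81267/50000)) (17411/50000) 3 (141654385489/100000000000)); expnum. Qed.

Lemma eb141 : (468009/20000000) <= exp ((267/100) - (257/40)).
Proof. apply (exp_neg_lb ((267/100) - (257/40)) (751/1600) 8 (625393016659/1000000000000)); expnum. Qed.

Lemma eb142 : (32000619/1000000000) <= exp ((267/100) - (764/125)).
Proof. apply (exp_neg_lb ((267/100) - (764/125)) (1721/3500) 7 (305788538481/500000000000)); expnum. Qed.

Lemma eb143 : exp ((277/100) - (764/125)) <= (8841539/250000000).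
Proof. apply (exp_neg_ub ((277/100) - (764/125)) (1671/3500) 7 (161192411693/100000000000)); expnum. Qed.

Lemma eb144 : (19264767/5000000) <= exp ((267/100) - (33029/25000)).
Proof. apply (exp_pos_lb ((267/100) - (33029/25000)) (33721/75000) 3 (3135411773/2000000000)); expnum. Qed.

Lemma eb145 : exp ((277/100) - (257/40)) <= (12930749/500000000).
Proof. apply (exp_neg_ub ((277/100) - (257/40)) (731/1600) 8 (157913147797/100000000000)); expnum. Qed.

Lemma eb146 : (12412583/2500000) <= exp ((267/100) - (53379/50000)).
Proof. apply (exp_pos_lb ((267/100) - (53379/50000)) (80121/200000) 4 (149272752389/100000000000)); expnum. Qed.

Lemma eb147 : (10798831/5000000) <= exp ((277/100) - (2)).
Proof. apply (exp_pos_lb ((277/100) - (2)) (77/200) 2 (14696143209/10000000000)); expnum. Qed.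

Lemma eb148 : exp ((29/10) - (2)) <= (384313/156250).
Proof. apply (exp_pos_ub ((29/10) - (2)) (9/20) 2 (637628151531/1000000000000)); expnum. Qed.

Lemma eb149 : (85157753/100000000000) <= exp ((277/100) - (491921/50000)).
Proof. apply (exp_neg_lb ((277/100) - (491921/50000)) (117807/250000) 15 (78029404551/125000000000)); expnum. Qed.

Lemma eb150 : exp ((29/10) - (431953/50000)) <= (32177917/10000000000).
Proof. apply (exp_neg_ub ((29/10) - (431953/50000)) (95651/200000) 12 (161325680763/100000000000)); expnum. Qed.

Lemma eb151 : (293919/20000) <= exp ((277/100) - (20607/250000)).
Proof. apply (exp_pos_lb ((277/100) - (20607/250000)) (671893/1500000) 6 (39126676203/25000000000)); expnum. Qed.

Lemma eb152 : exp ((29/10) - (48031/200000)) <= (7147037/500000).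
Proof. apply (exp_pos_ub ((29/10) - (48031/200000)) (177323/400000) 6 (320954894699/500000000000)); expnum. Qed.

Lemma eb153 : (313789/25000) <= exp ((277/100) - (48031/200000)).
Proof. apply (exp_pos_lb ((277/100) - (48031/200000)) (505969/1200000) 6 (152446088959/100000000000)); expnum. Qed.

Lemma eb154 : (30727873/100000000) <= exp ((277/100) - (79/20)).
Proof. apply (exp_neg_lb ((277/100) - (79/20)) (59/150) 3 (674803775477/1000000000000)); expnum. Qed.

Lemma eb155 : exp ((29/10) - (79/20)) <= (1399751/4000000).
Proof. apply (exp_neg_ub ((29/10) - (79/20)) (7/20) 3 (35476688709/25000000000)); expnum. Qed.

Lemma eb156 : (8485881/125000000) <= exp ((277/100) - (545991/100000)).
Proof. apply (exp_neg_lb ((277/100) - (545991/100000)) (268991/600000) 6 (127740266331/200000000000)); expnum. Qed.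

Lemma eb157 : exp ((29/10) - (479431/100000)) <= (1504221/10000000).
Proof. apply (exp_neg_ub ((29/10) - (479431/100000)) (189431/400000) 4 (40143210499/25000000000)); expnum. Qed.

Lemma eb158 : (48647873/500000000) <= exp ((277/100) - (51/10)).
Proof. apply (exp_neg_lb ((277/100) - (51/10)) (233/500) 5 (627507283919/1000000000000)); expnum. Qed.

Lemma eb159 : exp ((29/10) - (51/10)) <= (2770079/25000000).
Proof. apply (exp_neg_ub ((29/10) - (51/10)) (11/25) 5 (19408840209/12500000000)); expnum. Qed.

Lemma eb160 : (3576177/4000000) <= exp ((277/100) - (1441/500)).
Proof. apply (exp_neg_lb ((277/100) - (1441/500)) (14/125) 1 (357617703/400000000)); expnum. Qed.

Lemma eb161 : exp ((29/10) - (126533/50000)) <= (2893559/2000000).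
Proof. apply (exp_pos_ub ((29/10) - (126533/50000)) (18467/50000) 1 (345595182879/500000000000)); expnum. Qed.

Lemma eb162 : (7158621/200000000) <= exp ((277/100) - (61/10)).
Proof. apply (exp_neg_lb ((277/100) - (61/10)) (333/700) 7 (310720505651/500000000000)); expnum. Qed.

Lemma eb163 : exp ((29/10) - (61/10)) <= (8152441/200000000).
Proof. apply (exp_neg_ub ((29/10) - (61/10)) (16/35) 7 (78977725813/50000000000)); expnum. Qed.

Lemma eb164 : (1685141/400000) <= exp ((277/100) - (66593/50000)).
Proof. apply (exp_pos_lb ((277/100) - (66593/50000)) (23969/50000) 3 (161507274273/100000000000)); expnum. Qed.

Lemma eb165 : exp ((29/10) - (151677/100000)) <= (19938807/5000000).
Proof. apply (exp_pos_ub ((29/10) - (151677/100000)) (138323/300000) 3 (630604329097/1000000000000)); expnum. Qed.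

Lemma eb166 : (640931/62500000) <= exp ((277/100) - (147/20)).
Proof. apply (exp_neg_lb ((277/100) - (147/20)) (229/500) 10 (632547476099/1000000000000)); expnum. Qed.

Lemma eb167 : exp ((29/10) - (147/20)) <= (1459821/125000000).
Proof. apply (exp_neg_ub ((29/10) - (147/20)) (89/180) 9 (81979354957/50000000000)); expnum. Qed.

Lemma eb168 : (2865819/312500) <= exp ((277/100) - (110799/200000)).
Proof. apply (exp_pos_lb ((277/100) - (110799/200000)) (443201/1000000) 5 (77884269787/50000000000)); expnum. Qed.

Lemma eb169 : exp ((29/10) - (315453/500000)) <= (96706353/10000000).
Proof. apply (exp_pos_ub ((29/10) - (315453/500000)) (1134547/2500000) 5 (127039564113/200000000000)); expnum. Qed.

Lemma eb170 : (4322681/25000000) <= exp ((277/100) - (181/40)).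
Proof. apply (exp_neg_lb ((277/100) - (181/40)) (351/800) 4 (322420984951/500000000000)); expnum. Qed.

Lemma eb171 : (23038579/100000000) <= exp ((277/100) - (2119/500)).
Proof. apply (exp_neg_lb ((277/100) - (2119/500)) (367/750) 3 (306517473871/500000000000)); expnum. Qed.

Lemma eb172 : exp ((29/10) - (2119/500)) <= (26236989/100000000).
Proof. apply (exp_neg_ub ((29/10) - (2119/500)) (223/500) 3 (39051286613/25000000000)); expnum. Qed.

Lemma eb173 : (14336807/100000000) <= exp ((277/100) - (235617/50000)).
Proof. apply (exp_neg_lb ((277/100) - (235617/50000)) (97117/200000) 4 (153834279761/250000000000)); expnum. Qed.

Lemma eb174 : exp ((29/10) - (181/40)) <= (615349/3125000).
Proof. apply (exp_neg_ub ((29/10) - (181/40)) (13/32) 4 (150117779913/100000000000)); expnum. Qed.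

Lemma eb175 : (14155921/50000000) <= exp ((277/100) - (403189/100000)).
Proof. apply (exp_neg_lb ((277/100) - (403189/100000)) (42063/100000) 3 (164158252659/250000000000)); expnum. Qed.

Lemma eb176 : (12976891/100000000) <= exp ((277/100) - (1203/250)).
Proof. apply (exp_neg_lb ((277/100) - (1203/250)) (1021/2500) 5 (664712940427/1000000000000)); expnum. Qed.

Lemma eb177 : exp ((29/10) - (1203/250)) <= (14778453/100000000).
Proof. apply (exp_neg_ub ((29/10) - (1203/250)) (239/500) 4 (161284547961/100000000000)); expnum. Qed.

Lemma eb178 : (52099751/100000000) <= exp ((277/100) - (342201/100000)).
Proof. apply (exp_neg_lb ((277/100) - (342201/100000)) (65201/200000) 2 (721801578411/1000000000000)); expnum. Qed.

Lemma eb179 : (11236531/100000000) <= exp ((277/100) - (1239/250)).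
Proof. apply (exp_neg_lb ((277/100) - (1239/250)) (1093/2500) 5 (25833689999/40000000000)); expnum. Qed.

Lemma eb180 : exp ((29/10) - (1239/250)) <= (12796481/100000000).
Proof. apply (exp_neg_ub ((29/10) - (1239/250)) (257/625) 5 (150862705083/100000000000)); expnum. Qed.

Lemma eb181 : (34430851/50000000) <= exp ((277/100) - (314307/100000)).
Proof. apply (exp_neg_lb ((277/100) - (314307/100000)) (37307/100000) 1 (13772340559/20000000000)); expnum. Qed.

Lemma eb182 : (35016349/10000000) <= exp ((277/100) - (151677/100000)).
Proof. apply (exp_pos_lb ((277/100) - (151677/100000)) (125323/300000) 3 (1518530867/1000000000)); expnum. Qed.

Lemma eb183 : (4789667/250000000) <= exp ((277/100) - (269/40)).
Proof. apply (exp_neg_lb ((277/100) - (269/40)) (791/1600) 8 (121990401593/200000000000)); expnum. Qed.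

Lemma eb184 : exp ((29/10) - (269/40)) <= (5454609/250000000).
Proof. apply (exp_neg_ub ((29/10) - (269/40)) (153/320) 8 (161304709789/100000000000)); expnum. Qed.

Lemma eb185 : (59491419/10000000) <= exp ((277/100) - (986753/1000000)).
Proof. apply (exp_pos_lb ((277/100) - (986753/1000000)) (1783247/4000000) 4 (156175743601/100000000000)); expnum. Qed.

Lemma piece0 : forall r, (13/5) <= r <= (521/200) -> HSfacts r (19/5) (19/4) (57/10) (133/20) (101/100).
Proof.
  intros r Hr.
  assert (B : (728847/100000) <= fr r 2 <= (732501/100000)) by (apply (enc_dec (13/5) (521/200) (2) (2) (728847/100000) (732501/100000)); [lra|lra|pose proof eb0; lra|pose proof eb1; lra|lra|lra]).
  assert (A : (11899/25000) <= fr r (fr r 2) <= (491211/1000000)) by (apply (enc_dec (13/5) (521/200) (728847/100000) (732501/100000) (11899/25000) (491211/1000000)); [lra|lra|pose proof eb2; lra|pose proof eb3; lra|lra|lra]).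
  assert (C : (37899/20000) <= fr r (fr r (fr r 2)) <= (6243/3125)) by (apply (enc_inc (13/5) (521/200) (11899/25000) (491211/1000000) (37899/20000) (6243/3125)); [lra|lra|lra|pose proof eb4; lra|pose proof eb5; lra|lra|lra]).
  assert (AC : fr r (fr r 2) < fr r (fr r (fr r 2))) by (apply (fr_gt_id (13/5) (11899/25000) (491211/1000000)); [lra|lra|lra|pose proof eb6; lra]).
  assert (G1a : (108731/25000) <= fr r (19/5) <= (87421/20000)) by (apply (enc_dec (13/5) (521/200) (19/5) (19/5) (108731/25000) (87421/20000)); [lra|lra|pose proof eb7; lra|pose proof eb8; lra|lra|lra]).
  assert (G1 : (162549/50000) <= fr r (fr r (19/5)) <= (20663/6250)) by (apply (enc_dec (13/5) (521/200) (108731/25000) (87421/20000) (162549/50000) (20663/6250)); [lra|lra|pose proof eb9; lra|pose proof eb10; lra|lra|lra]).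
  assert (G2a : (262817/100000) <= fr r (19/4) <= (52827/20000)) by (apply (enc_dec (13/5) (521/200) (19/4) (19/4) (262817/100000) (52827/20000)); [lra|lra|pose proof eb11; lra|pose proof eb12; lra|lra|lra]).
  assert (G2 : (167353/25000) <= fr r (fr r (19/4)) <= (168727/25000)) by (apply (enc_dec (13/5) (521/200) (262817/100000) (52827/20000) (167353/25000) (168727/25000)); [lra|lra|pose proof eb13; lra|pose proof eb14; lra|lra|lra]).
  assert (G3a : (36591/25000) <= fr r (57/10) <= (147099/100000)) by (apply (enc_dec (13/5) (521/200) (57/10) (57/10) (36591/25000) (147099/100000)); [lra|lra|pose proof eb15; lra|pose proof eb16; lra|lra|lra]).
  assert (G3 : (133479/20000) <= fr r (fr r (57/10)) <= (336267/50000)) by (apply (enc_inc (13/5) (521/200) (36591/25000) (147099/100000) (133479/20000) (336267/50000)); [lra|lra|lra|pose proof eb17; lra|pose proof eb18; lra|lra|lra]).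
  assert (G4a : (38523/50000) <= fr r (133/20) <= (774323/1000000)) by (apply (enc_dec (13/5) (521/200) (133/20) (133/20) (38523/50000) (774323/1000000)); [lra|lra|pose proof eb19; lra|pose proof eb20; lra|lra|lra]).
  assert (G4 : (184939/50000) <= fr r (fr r (133/20)) <= (374023/100000)) by (apply (enc_inc (13/5) (521/200) (38523/50000) (774323/1000000) (184939/50000) (374023/100000)); [lra|lra|lra|pose proof eb21; lra|pose proof eb22; lra|lra|lra]).
  assert (X0 : mexp (1) (101/100) (19/5) (19/4) (fun x => fr r (fr r x))).
  { apply mexp_join with (c := (171/40)).
  { apply mexp_weak with (m := (12811/10000) * (41447/50000)); [lra|].
    replace (1) with ((-1) * (-1)) by lra.
    apply (mexp_comp (-1) (-1) (12811/10000) (41447/50000) (19/5) (171/40) (342317/100000) (87421/20000) (fr r) (fr r)); [right; reflexivity|lra|lra|apply (fexp_dec (13/5) (19/5) (171/40) (12811/10000) r); [lra|lra|pose proof eb23; lra|lra]|intros x Hx; apply (enc_dec (13/5) (521/200) (19/5) (171/40) (342317/100000) (87421/20000)); [lra|lra|pose proof eb23; lra|pose proof eb8; lra|lra|lra]|apply (fexp_dec (13/5) (342317/100000) (87421/20000) (41447/50000) r); [lra|lra|pose proof eb9; lra|lra]]. }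
  { apply mexp_join with (c := (564/125)).
  { apply mexp_weak with (m := (3593/2500) * (2619/2000)); [lra|].
    replace (1) with ((-1) * (-1)) by lra.
    apply (mexp_comp (-1) (-1) (3593/2500) (2619/2000) (171/40) (564/125) (300861/100000) (172017/50000) (fr r) (fr r)); [right; reflexivity|lra|lra|apply (fexp_dec (13/5) (171/40) (564/125) (3593/2500) r); [lra|lra|pose proof eb26; lra|lra]|intros x Hx; apply (enc_dec (13/5) (521/200) (171/40) (564/125) (300861/100000) (172017/50000)); [lra|lra|pose proof eb26; lra|pose proof eb24; lra|lra|lra]|apply (fexp_dec (13/5) (300861/100000) (172017/50000) (2619/2000) r); [lra|lra|pose proof eb25; lra|lra]]. }
  { apply mexp_weak with (m := (6601/5000) * (10807/10000)); [lra|].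
    replace (1) with ((-1) * (-1)) by lra.
    apply (mexp_comp (-1) (-1) (6601/5000) (10807/10000) (564/125) (19/4) (262817/100000) (30237/10000) (fr r) (fr r)); [right; reflexivity|lra|lra|apply (fexp_dec (13/5) (564/125) (19/4) (6601/5000) r); [lra|lra|pose proof eb11; lra|lra]|intros x Hx; apply (enc_dec (13/5) (521/200) (564/125) (19/4) (262817/100000) (30237/10000)); [lra|lra|pose proof eb11; lra|pose proof eb27; lra|lra|lra]|apply (fexp_dec (13/5) (262817/100000) (30237/10000) (10807/10000) r); [lra|lra|pose proof eb28; lra|lra]]. }
  }
  }
  assert (X1 : mexp (-1) (101/100) (57/10) (133/20) (fun x => fr r (fr r x))).
  { apply mexp_join with (c := (247/40)).
  { apply mexp_weak with (m := (14771/25000) * (4813/2000)); [lra|].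
    replace (-1) with ((-1) * (1)) by lra.
    apply (mexp_comp (-1) (1) (14771/25000) (4813/2000) (57/10) (247/40) (13353/12500) (147099/100000) (fr r) (fr r)); [right; reflexivity|lra|lra|apply (fexp_dec (13/5) (57/10) (247/40) (14771/25000) r); [lra|lra|pose proof eb30; lra|lra]|intros x Hx; apply (enc_dec (13/5) (521/200) (57/10) (247/40) (13353/12500) (147099/100000)); [lra|lra|pose proof eb30; lra|pose proof eb16; lra|lra|lra]|apply (fexp_inc (13/5) (13353/12500) (147099/100000) (4813/2000) r); [lra|lra|lra|pose proof eb29; lra|pose proof eb29; lra|lra]]. }
  { apply mexp_weak with (m := (8983/20000) * (4359/1000)); [lra|].
    replace (-1) with ((-1) * (1)) by lra.
    apply (mexp_comp (-1) (1) (8983/20000) (4359/1000) (247/40) (133/20) (38523/50000) (107361/100000) (fr r) (fr r)); [right; reflexivity|lra|lra|apply (fexp_dec (13/5) (247/40) (133/20) (8983/20000) r); [lra|lra|pose proof eb19; lra|lra]|intros x Hx; apply (enc_dec (13/5) (521/200) (247/40) (133/20) (38523/50000) (107361/100000)); [lra|lra|pose proof eb19; lra|pose proof eb31; lra|lra|lra]|apply (fexp_inc (13/5) (38523/50000) (107361/100000) (4359/1000) r); [lra|lra|lra|pose proof eb32; lra|pose proof eb32; lra|lra]]. }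
  }
  unfold HSfacts; repeat split; try lra; assumption.
Qed.

Lemma piece1 : forall r, (521/200) <= r <= (131/50) -> HSfacts r (77/20) (24/5) (57/10) (67/10) (101/100).
Proof.
  intros r Hr.
  assert (B : (293/40) <= fr r 2 <= (185893/25000)) by (apply (enc_dec (521/200) (131/50) (2) (2) (293/40) (185893/25000)); [lra|lra|pose proof eb33; lra|pose proof eb34; lra|lra|lra]).
  assert (A : (55157/125000) <= fr r (fr r 2) <= (485579/1000000)) by (apply (enc_dec (521/200) (131/50) (293/40) (185893/25000) (55157/125000) (485579/1000000)); [lra|lra|pose proof eb35; lra|pose proof eb36; lra|lra|lra]).
  assert (C : (84733/50000) <= fr r (fr r (fr r 2)) <= (199291/100000)) by (apply (enc_inc (521/200) (131/50) (55157/125000) (485579/1000000) (84733/50000) (199291/100000)); [lra|lra|lra|pose proof eb37; lra|pose proof eb38; lra|lra|lra]).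
  assert (AC : fr r (fr r 2) < fr r (fr r (fr r 2))) by (apply (fr_gt_id (521/200) (55157/125000) (485579/1000000)); [lra|lra|lra|pose proof eb39; lra]).
  assert (G1a : (1067/250) <= fr r (77/20) <= (433251/100000)) by (apply (enc_dec (521/200) (131/50) (77/20) (77/20) (1067/250) (433251/100000)); [lra|lra|pose proof eb40; lra|pose proof eb41; lra|lra|lra]).
  assert (G1 : (333603/100000) <= fr r (fr r (77/20)) <= (43817/12500)) by (apply (enc_dec (521/200) (131/50) (1067/250) (433251/100000) (333603/100000) (43817/12500)); [lra|lra|pose proof eb42; lra|pose proof eb43; lra|lra|lra]).
  assert (G2a : (25657/10000) <= fr r (24/5) <= (8139/3125)) by (apply (enc_dec (521/200) (131/50) (24/5) (24/5) (25657/10000) (8139/3125)); [lra|lra|pose proof eb44; lra|pose proof eb45; lra|lra|lra]).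
  assert (G2 : (169671/25000) <= fr r (fr r (24/5)) <= (139003/20000)) by (apply (enc_dec (521/200) (131/50) (25657/10000) (8139/3125) (169671/25000) (139003/20000)); [lra|lra|pose proof eb46; lra|pose proof eb47; lra|lra|lra]).
  assert (G3a : (73549/50000) <= fr r (57/10) <= (74661/50000)) by (apply (enc_dec (521/200) (131/50) (57/10) (57/10) (73549/50000) (74661/50000)); [lra|lra|pose proof eb48; lra|pose proof eb49; lra|lra|lra]).
  assert (G3 : (67253/10000) <= fr r (fr r (57/10)) <= (344011/50000)) by (apply (enc_inc (521/200) (131/50) (73549/50000) (74661/50000) (67253/10000) (344011/50000)); [lra|lra|lra|pose proof eb50; lra|pose proof eb51; lra|lra|lra]).
  assert (G4a : (186919/250000) <= fr r (67/10) <= (758977/1000000)) by (apply (enc_dec (521/200) (131/50) (67/10) (67/10) (186919/250000) (758977/1000000)); [lra|lra|pose proof eb52; lra|pose proof eb53; lra|lra|lra]).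
  assert (G4 : (358139/100000) <= fr r (fr r (67/10)) <= (23151/6250)) by (apply (enc_inc (521/200) (131/50) (186919/250000) (758977/1000000) (358139/100000) (23151/6250)); [lra|lra|lra|pose proof eb54; lra|pose proof eb55; lra|lra|lra]).
  assert (X0 : mexp (1) (101/100) (77/20) (24/5) (fun x => fr r (fr r x))).
  { apply mexp_join with (c := (173/40)).
  { apply mexp_weak with (m := (12753/10000) * (40169/50000)); [lra|].
    replace (1) with ((-1) * (-1)) by lra.
    apply (mexp_comp (-1) (-1) (12753/10000) (40169/50000) (77/20) (173/40) (167477/50000) (433251/100000) (fr r) (fr r)); [right; reflexivity|lra|lra|apply (fexp_dec (521/200) (77/20) (173/40) (12753/10000) r); [lra|lra|pose proof eb56; lra|lra]|intros x Hx; apply (enc_dec (521/200) (131/50) (77/20) (173/40) (167477/50000) (433251/100000)); [lra|lra|pose proof eb56; lra|pose proof eb41; lra|lra|lra]|apply (fexp_dec (521/200) (167477/50000) (433251/100000) (40169/50000) r); [lra|lra|pose proof eb42; lra|lra]]. }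
  { apply mexp_join with (c := (2281/500)).
  { apply mexp_weak with (m := (7103/5000) * (12483/10000)); [lra|].
    replace (1) with ((-1) * (-1)) by lra.
    apply (mexp_comp (-1) (-1) (7103/5000) (12483/10000) (173/40) (2281/500) (294033/100000) (340017/100000) (fr r) (fr r)); [right; reflexivity|lra|lra|apply (fexp_dec (521/200) (173/40) (2281/500) (7103/5000) r); [lra|lra|pose proof eb59; lra|lra]|intros x Hx; apply (enc_dec (521/200) (131/50) (173/40) (2281/500) (294033/100000) (340017/100000)); [lra|lra|pose proof eb59; lra|pose proof eb57; lra|lra|lra]|apply (fexp_dec (521/200) (294033/100000) (340017/100000) (12483/10000) r); [lra|lra|pose proof eb58; lra|lra]]. }
  { apply mexp_weak with (m := (2603/2000) * (99279/100000)); [lra|].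
    replace (1) with ((-1) * (-1)) by lra.
    apply (mexp_comp (-1) (-1) (2603/2000) (99279/100000) (2281/500) (24/5) (25657/10000) (298477/100000) (fr r) (fr r)); [right; reflexivity|lra|lra|apply (fexp_dec (521/200) (2281/500) (24/5) (2603/2000) r); [lra|lra|pose proof eb44; lra|lra]|intros x Hx; apply (enc_dec (521/200) (131/50) (2281/500) (24/5) (25657/10000) (298477/100000)); [lra|lra|pose proof eb44; lra|pose proof eb60; lra|lra|lra]|apply (fexp_dec (521/200) (25657/10000) (298477/100000) (99279/100000) r); [lra|lra|pose proof eb61; lra|lra]]. }
  }
  }
  assert (X1 : mexp (-1) (101/100) (57/10) (67/10) (fun x => fr r (fr r x))).
  { apply mexp_join with (c := (31/5)).
  { apply mexp_weak with (m := (28957/50000) * (11501/5000)); [lra|].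
    replace (-1) with ((-1) * (1)) by lra.
    apply (mexp_comp (-1) (1) (28957/50000) (11501/5000) (57/10) (31/5) (52779/50000) (74661/50000) (fr r) (fr r)); [right; reflexivity|lra|lra|apply (fexp_dec (521/200) (57/10) (31/5) (28957/50000) r); [lra|lra|pose proof eb63; lra|lra]|intros x Hx; apply (enc_dec (521/200) (131/50) (57/10) (31/5) (52779/50000) (74661/50000)); [lra|lra|pose proof eb63; lra|pose proof eb49; lra|lra|lra]|apply (fexp_inc (521/200) (52779/50000) (74661/50000) (11501/5000) r); [lra|lra|lra|pose proof eb62; lra|pose proof eb62; lra|lra]]. }
  { apply mexp_weak with (m := (43371/100000) * (4339/1000)); [lra|].
    replace (-1) with ((-1) * (1)) by lra.
    apply (mexp_comp (-1) (1) (43371/100000) (4339/1000) (31/5) (67/10) (186919/250000) (21431/20000) (fr r) (fr r)); [right; reflexivity|lra|lra|apply (fexp_dec (521/200) (31/5) (67/10) (43371/100000) r); [lra|lra|pose proof eb52; lra|lra]|intros x Hx; apply (enc_dec (521/200) (131/50) (31/5) (67/10) (186919/250000) (21431/20000)); [lra|lra|pose proof eb52; lra|pose proof eb64; lra|lra|lra]|apply (fexp_inc (521/200) (186919/250000) (21431/20000) (4339/1000) r); [lra|lra|lra|pose proof eb65; lra|pose proof eb65; lra|lra]]. }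
  }
  unfold HSfacts; repeat split; try lra; assumption.
Qed.

Lemma piece2 : forall r, (131/50) <= r <= (267/100) -> HSfacts r (73/20) (49/10) (57/10) (137/20) (101/100).
Proof.
  intros r Hr.
  assert (B : (743571/100000) <= fr r 2 <= (156339/20000)) by (apply (enc_dec (131/50) (267/100) (2) (2) (743571/100000) (156339/20000)); [lra|lra|pose proof eb66; lra|pose proof eb67; lra|lra|lra]).
  assert (A : (338117/1000000) <= fr r (fr r 2) <= (94179/200000)) by (apply (enc_dec (131/50) (267/100) (743571/100000) (156339/20000) (338117/1000000) (94179/200000)); [lra|lra|pose proof eb68; lra|pose proof eb69; lra|lra|lra]).
  assert (C : (5599/5000) <= fr r (fr r (fr r 2)) <= (24993/12500)) by (apply (enc_inc (131/50) (267/100) (338117/1000000) (94179/200000) (5599/5000) (24993/12500)); [lra|lra|lra|pose proof eb70; lra|pose proof eb71; lra|lra|lra]).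
  assert (AC : fr r (fr r 2) < fr r (fr r (fr r 2))) by (apply (fr_gt_id (131/50) (338117/1000000) (94179/200000)); [lra|lra|lra|pose proof eb72; lra]).
  assert (G1a : (237811/50000) <= fr r (73/20) <= (500009/100000)) by (apply (enc_dec (131/50) (267/100) (73/20) (73/20) (237811/50000) (500009/100000)); [lra|lra|pose proof eb73; lra|pose proof eb74; lra|lra|lra]).
  assert (G1 : (231363/100000) <= fr r (fr r (73/20)) <= (280861/100000)) by (apply (enc_dec (131/50) (267/100) (237811/50000) (500009/100000) (231363/100000) (280861/100000)); [lra|lra|pose proof eb75; lra|pose proof eb76; lra|lra|lra]).
  assert (G2a : (15349/6250) <= fr r (49/10) <= (8068/3125)) by (apply (enc_dec (131/50) (267/100) (49/10) (49/10) (15349/6250) (8068/3125)); [lra|lra|pose proof eb77; lra|pose proof eb78; lra|lra|lra]).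
  assert (G2 : (69253/10000) <= fr r (fr r (49/10)) <= (46697/6250)) by (apply (enc_dec (131/50) (267/100) (15349/6250) (8068/3125) (69253/10000) (46697/6250)); [lra|lra|pose proof eb79; lra|pose proof eb80; lra|lra|lra]).
  assert (G3a : (149321/100000) <= fr r (57/10) <= (78489/50000)) by (apply (enc_dec (131/50) (267/100) (57/10) (57/10) (149321/100000) (78489/50000)); [lra|lra|pose proof eb81; lra|pose proof eb82; lra|lra|lra]).
  assert (G3 : (688019/100000) <= fr r (fr r (57/10)) <= (740453/100000)) by (apply (enc_inc (131/50) (267/100) (149321/100000) (78489/50000) (688019/100000) (740453/100000)); [lra|lra|lra|pose proof eb83; lra|pose proof eb84; lra|lra|lra]).
  assert (G4a : (341417/500000) <= fr r (137/20) <= (143569/200000)) by (apply (enc_dec (131/50) (267/100) (137/20) (137/20) (341417/500000) (143569/200000)); [lra|lra|pose proof eb85; lra|pose proof eb86; lra|lra|lra]).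
  assert (G4 : (161771/50000) <= fr r (fr r (137/20)) <= (362971/100000)) by (apply (enc_inc (131/50) (267/100) (341417/500000) (143569/200000) (161771/50000) (362971/100000)); [lra|lra|lra|pose proof eb87; lra|pose proof eb88; lra|lra|lra]).
  assert (X0 : mexp (1) (101/100) (73/20) (49/10) (fun x => fr r (fr r x))).
  { apply mexp_join with (c := (1981/500)).
  { apply mexp_weak with (m := (7869/5000) * (39899/50000)); [lra|].
    replace (1) with ((-1) * (-1)) by lra.
    apply (mexp_comp (-1) (-1) (7869/5000) (39899/50000) (73/20) (1981/500) (410209/100000) (500009/100000) (fr r) (fr r)); [right; reflexivity|lra|lra|apply (fexp_dec (131/50) (73/20) (1981/500) (7869/5000) r); [lra|lra|pose proof eb90; lra|lra]|intros x Hx; apply (enc_dec (131/50) (267/100) (73/20) (1981/500) (410209/100000) (500009/100000)); [lra|lra|pose proof eb90; lra|pose proof eb74; lra|lra|lra]|apply (fexp_dec (131/50) (410209/100000) (500009/100000) (39899/50000) r); [lra|lra|pose proof eb75; lra|lra]]. }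
  { apply mexp_join with (c := (171/40)).
  { apply mexp_weak with (m := (7427/5000) * (23983/25000)); [lra|].
    replace (1) with ((-1) * (-1)) by lra.
    apply (mexp_comp (-1) (-1) (7427/5000) (23983/25000) (1981/500) (171/40) (21827/6250) (215621/50000) (fr r) (fr r)); [right; reflexivity|lra|lra|apply (fexp_dec (131/50) (1981/500) (171/40) (7427/5000) r); [lra|lra|pose proof eb89; lra|lra]|intros x Hx; apply (enc_dec (131/50) (267/100) (1981/500) (171/40) (21827/6250) (215621/50000)); [lra|lra|pose proof eb89; lra|pose proof eb91; lra|lra|lra]|apply (fexp_dec (131/50) (21827/6250) (215621/50000) (23983/25000) r); [lra|lra|pose proof eb92; lra|lra]]. }
  { apply mexp_join with (c := (1147/250)).
  { apply mexp_weak with (m := (1359/1000) * (24191/25000)); [lra|].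
    replace (1) with ((-1) * (-1)) by lra.
    apply (mexp_comp (-1) (-1) (1359/1000) (24191/25000) (171/40) (1147/250) (14707/5000) (367139/100000) (fr r) (fr r)); [right; reflexivity|lra|lra|apply (fexp_dec (131/50) (171/40) (1147/250) (1359/1000) r); [lra|lra|pose proof eb95; lra|lra]|intros x Hx; apply (enc_dec (131/50) (267/100) (171/40) (1147/250) (14707/5000) (367139/100000)); [lra|lra|pose proof eb95; lra|pose proof eb93; lra|lra|lra]|apply (fexp_dec (131/50) (14707/5000) (367139/100000) (24191/25000) r); [lra|lra|pose proof eb94; lra|lra]]. }
  { apply mexp_join with (c := (593/125)).
  { apply mexp_weak with (m := (2839/2000) * (11587/10000)); [lra|].
    replace (1) with ((-1) * (-1)) by lra.
    apply (mexp_comp (-1) (-1) (2839/2000) (11587/10000) (1147/250) (593/125) (269059/100000) (154611/50000) (fr r) (fr r)); [right; reflexivity|lra|lra|apply (fexp_dec (131/50) (1147/250) (593/125) (2839/2000) r); [lra|lra|pose proof eb98; lra|lra]|intros x Hx; apply (enc_dec (131/50) (267/100) (1147/250) (593/125) (269059/100000) (154611/50000)); [lra|lra|pose proof eb98; lra|pose proof eb96; lra|lra|lra]|apply (fexp_dec (131/50) (269059/100000) (154611/50000) (11587/10000) r); [lra|lra|pose proof eb97; lra|lra]]. }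
  { apply mexp_weak with (m := (6657/5000) * (45437/50000)); [lra|].
    replace (1) with ((-1) * (-1)) by lra.
    apply (mexp_comp (-1) (-1) (6657/5000) (45437/50000) (593/125) (49/10) (15349/6250) (56571/20000) (fr r) (fr r)); [right; reflexivity|lra|lra|apply (fexp_dec (131/50) (593/125) (49/10) (6657/5000) r); [lra|lra|pose proof eb77; lra|lra]|intros x Hx; apply (enc_dec (131/50) (267/100) (593/125) (49/10) (15349/6250) (56571/20000)); [lra|lra|pose proof eb77; lra|pose proof eb99; lra|lra|lra]|apply (fexp_dec (131/50) (15349/6250) (56571/20000) (45437/50000) r); [lra|lra|pose proof eb100; lra|lra]]. }
  }
  }
  }
  }
  assert (X1 : mexp (-1) (101/100) (57/10) (137/20) (fun x => fr r (fr r x))).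
  { apply mexp_join with (c := (251/40)).
  { apply mexp_weak with (m := (54541/100000) * (19303/10000)); [lra|].
    replace (-1) with ((-1) * (1)) by lra.
    apply (mexp_comp (-1) (1) (54541/100000) (19303/10000) (57/10) (251/40) (101831/100000) (78489/50000) (fr r) (fr r)); [right; reflexivity|lra|lra|apply (fexp_dec (131/50) (57/10) (251/40) (54541/100000) r); [lra|lra|pose proof eb102; lra|lra]|intros x Hx; apply (enc_dec (131/50) (267/100) (57/10) (251/40) (101831/100000) (78489/50000)); [lra|lra|pose proof eb102; lra|pose proof eb82; lra|lra|lra]|apply (fexp_inc (131/50) (101831/100000) (78489/50000) (19303/10000) r); [lra|lra|lra|pose proof eb101; lra|pose proof eb101; lra|lra]]. }
  { apply mexp_weak with (m := (39037/100000) * (2647/625)); [lra|].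
    replace (-1) with ((-1) * (1)) by lra.
    apply (mexp_comp (-1) (1) (39037/100000) (2647/625) (251/40) (137/20) (341417/500000) (107053/100000) (fr r) (fr r)); [right; reflexivity|lra|lra|apply (fexp_dec (131/50) (251/40) (137/20) (39037/100000) r); [lra|lra|pose proof eb85; lra|lra]|intros x Hx; apply (enc_dec (131/50) (267/100) (251/40) (137/20) (341417/500000) (107053/100000)); [lra|lra|pose proof eb85; lra|pose proof eb103; lra|lra|lra]|apply (fexp_inc (131/50) (341417/500000) (107053/100000) (2647/625) r); [lra|lra|lra|pose proof eb104; lra|pose proof eb104; lra|lra]]. }
  }
  unfold HSfacts; repeat split; try lra; assumption.
Qed.

Lemma piece3 : forall r, (267/100) <= r <= (277/100) -> HSfacts r (19/5) (5) (29/5) (141/20) (101/100).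
Proof.
  intros r Hr.
  assert (B : (390847/50000) <= fr r 2 <= (863907/100000)) by (apply (enc_dec (267/100) (277/100) (2) (2) (390847/50000) (863907/100000)); [lra|lra|pose proof eb105; lra|pose proof eb106; lra|lra|lra]).
  assert (A : (190809/1000000) <= fr r (fr r 2) <= (9821/25000)) by (apply (enc_dec (267/100) (277/100) (390847/50000) (863907/100000) (190809/1000000) (9821/25000)); [lra|lra|pose proof eb107; lra|pose proof eb108; lra|lra|lra]).
  assert (C : (217203/500000) <= fr r (fr r (fr r 2)) <= (5196/3125)) by (apply (enc_inc (267/100) (277/100) (190809/1000000) (9821/25000) (217203/500000) (5196/3125)); [lra|lra|lra|pose proof eb109; lra|pose proof eb110; lra|lra|lra]).
  assert (AC : fr r (fr r 2) < fr r (fr r (fr r 2))) by (apply (fr_gt_id (267/100) (190809/1000000) (9821/25000)); [lra|lra|lra|pose proof eb111; lra]).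
  assert (G1a : (23323/5000) <= fr r (19/5) <= (515519/100000)) by (apply (enc_dec (267/100) (277/100) (19/5) (19/5) (23323/5000) (515519/100000)); [lra|lra|pose proof eb112; lra|pose proof eb113; lra|lra|lra]).
  assert (G1 : (221403/100000) <= fr r (fr r (19/5)) <= (327201/100000)) by (apply (enc_dec (267/100) (277/100) (23323/5000) (515519/100000) (221403/100000) (327201/100000)); [lra|lra|pose proof eb114; lra|pose proof eb115; lra|lra|lra]).
  assert (G2a : (243239/100000) <= fr r (5) <= (134411/50000)) by (apply (enc_dec (267/100) (277/100) (5) (5) (243239/100000) (134411/50000)); [lra|lra|pose proof eb116; lra|pose proof eb117; lra|lra|lra]).
  assert (G2 : (141921/20000) <= fr r (fr r (5)) <= (103657/12500)) by (apply (enc_dec (267/100) (277/100) (243239/100000) (134411/50000) (141921/20000) (103657/12500)); [lra|lra|pose proof eb118; lra|pose proof eb119; lra|lra|lra]).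
  assert (G3a : (73533/50000) <= fr r (29/5) <= (81267/50000)) by (apply (enc_dec (267/100) (277/100) (29/5) (29/5) (73533/50000) (81267/50000)); [lra|lra|pose proof eb120; lra|pose proof eb121; lra|lra|lra]).
  assert (G3 : (358807/50000) <= fr r (fr r (29/5)) <= (829867/100000)) by (apply (enc_inc (267/100) (277/100) (73533/50000) (81267/50000) (358807/50000) (829867/100000)); [lra|lra|lra|pose proof eb122; lra|pose proof eb123; lra|lra|lra]).
  assert (G4a : (622541/1000000) <= fr r (141/20) <= (137603/200000)) by (apply (enc_dec (267/100) (277/100) (141/20) (141/20) (622541/1000000) (137603/200000)); [lra|lra|pose proof eb124; lra|pose proof eb125; lra|lra|lra]).
  assert (G4 : (150143/50000) <= fr r (fr r (141/20)) <= (379657/100000)) by (apply (enc_inc (267/100) (277/100) (622541/1000000) (137603/200000) (150143/50000) (379657/100000)); [lra|lra|lra|pose proof eb126; lra|pose proof eb127; lra|lra|lra]).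
  assert (X0 : mexp (1) (101/100) (19/5) (5) (fun x => fr r (fr r x))).
  { apply mexp_join with (c := (41/10)).
  { apply mexp_weak with (m := (1023/625) * (6779/10000)); [lra|].
    replace (1) with ((-1) * (-1)) by lra.
    apply (mexp_comp (-1) (-1) (1023/625) (6779/10000) (19/5) (41/10) (201139/50000) (515519/100000) (fr r) (fr r)); [right; reflexivity|lra|lra|apply (fexp_dec (267/100) (19/5) (41/10) (1023/625) r); [lra|lra|pose proof eb129; lra|lra]|intros x Hx; apply (enc_dec (267/100) (277/100) (19/5) (41/10) (201139/50000) (515519/100000)); [lra|lra|pose proof eb129; lra|pose proof eb113; lra|lra|lra]|apply (fexp_dec (267/100) (201139/50000) (515519/100000) (6779/10000) r); [lra|lra|pose proof eb114; lra|lra]]. }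
  { apply mexp_join with (c := (22/5)).
  { apply mexp_weak with (m := (954/625) * (2081/2500)); [lra|].
    replace (1) with ((-1) * (-1)) by lra.
    apply (mexp_comp (-1) (-1) (954/625) (2081/2500) (41/10) (22/5) (171611/50000) (444587/100000) (fr r) (fr r)); [right; reflexivity|lra|lra|apply (fexp_dec (267/100) (41/10) (22/5) (954/625) r); [lra|lra|pose proof eb128; lra|lra]|intros x Hx; apply (enc_dec (267/100) (277/100) (41/10) (22/5) (171611/50000) (444587/100000)); [lra|lra|pose proof eb128; lra|pose proof eb130; lra|lra|lra]|apply (fexp_dec (267/100) (171611/50000) (444587/100000) (2081/2500) r); [lra|lra|pose proof eb131; lra|lra]]. }
  { apply mexp_join with (c := (47/10)).
  { apply mexp_weak with (m := (13869/10000) * (17007/20000)); [lra|].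
    replace (1) with ((-1) * (-1)) by lra.
    apply (mexp_comp (-1) (-1) (13869/10000) (17007/20000) (22/5) (47/10) (7253/2500) (9483/2500) (fr r) (fr r)); [right; reflexivity|lra|lra|apply (fexp_dec (267/100) (22/5) (47/10) (13869/10000) r); [lra|lra|pose proof eb134; lra|lra]|intros x Hx; apply (enc_dec (267/100) (277/100) (22/5) (47/10) (7253/2500) (9483/2500)); [lra|lra|pose proof eb134; lra|pose proof eb132; lra|lra|lra]|apply (fexp_dec (267/100) (7253/2500) (9483/2500) (17007/20000) r); [lra|lra|pose proof eb133; lra|lra]]. }
  { apply mexp_join with (c := (97/20)).
  { apply mexp_weak with (m := (1793/1250) * (10249/10000)); [lra|].
    replace (1) with ((-1) * (-1)) by lra.
    apply (mexp_comp (-1) (-1) (1793/1250) (10249/10000) (47/10) (97/20) (265901/100000) (320633/100000) (fr r) (fr r)); [right; reflexivity|lra|lra|apply (fexp_dec (267/100) (47/10) (97/20) (1793/1250) r); [lra|lra|pose proof eb137; lra|lra]|intros x Hx; apply (enc_dec (267/100) (277/100) (47/10) (97/20) (265901/100000) (320633/100000)); [lra|lra|pose proof eb137; lra|pose proof eb135; lra|lra|lra]|apply (fexp_dec (267/100) (265901/100000) (320633/100000) (10249/10000) r); [lra|lra|pose proof eb136; lra|lra]]. }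
  { apply mexp_weak with (m := (1681/1250) * (80393/100000)); [lra|].
    replace (1) with ((-1) * (-1)) by lra.
    apply (mexp_comp (-1) (-1) (1681/1250) (80393/100000) (97/20) (5) (243239/100000) (73467/25000) (fr r) (fr r)); [right; reflexivity|lra|lra|apply (fexp_dec (267/100) (97/20) (5) (1681/1250) r); [lra|lra|pose proof eb116; lra|lra]|intros x Hx; apply (enc_dec (267/100) (277/100) (97/20) (5) (243239/100000) (73467/25000)); [lra|lra|pose proof eb116; lra|pose proof eb138; lra|lra|lra]|apply (fexp_dec (267/100) (243239/100000) (73467/25000) (80393/100000) r); [lra|lra|pose proof eb139; lra|lra]]. }
  }
  }
  }
  }
  assert (X1 : mexp (-1) (101/100) (29/5) (141/20) (fun x => fr r (fr r x))).
  { apply mexp_join with (c := (764/125)).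
  { apply mexp_weak with (m := (70529/100000) * (4327/2500)); [lra|].
    replace (-1) with ((-1) * (1)) by lra.
    apply (mexp_comp (-1) (1) (70529/100000) (4327/2500) (29/5) (764/125) (119543/100000) (81267/50000) (fr r) (fr r)); [right; reflexivity|lra|lra|apply (fexp_dec (267/100) (29/5) (764/125) (70529/100000) r); [lra|lra|pose proof eb142; lra|lra]|intros x Hx; apply (enc_dec (267/100) (277/100) (29/5) (764/125) (119543/100000) (81267/50000)); [lra|lra|pose proof eb142; lra|pose proof eb121; lra|lra|lra]|apply (fexp_inc (267/100) (119543/100000) (81267/50000) (4327/2500) r); [lra|lra|lra|pose proof eb140; lra|pose proof eb140; lra|lra]]. }
  { apply mexp_join with (c := (257/40)).
  { apply mexp_weak with (m := (58811/100000) * (6911/2000)); [lra|].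
    replace (-1) with ((-1) * (1)) by lra.
    apply (mexp_comp (-1) (1) (58811/100000) (6911/2000) (764/125) (257/40) (193197/200000) (33029/25000) (fr r) (fr r)); [right; reflexivity|lra|lra|apply (fexp_dec (267/100) (764/125) (257/40) (58811/100000) r); [lra|lra|pose proof eb141; lra|lra]|intros x Hx; apply (enc_dec (267/100) (277/100) (764/125) (257/40) (193197/200000) (33029/25000)); [lra|lra|pose proof eb141; lra|pose proof eb143; lra|lra|lra]|apply (fexp_inc (267/100) (193197/200000) (33029/25000) (6911/2000) r); [lra|lra|lra|pose proof eb144; lra|pose proof eb144; lra|lra]]. }
  { apply mexp_weak with (m := (3561/10000) * (2661/625)); [lra|].
    replace (-1) with ((-1) * (1)) by lra.
    apply (mexp_comp (-1) (1) (3561/10000) (2661/625) (257/40) (141/20) (622541/1000000) (53379/50000) (fr r) (fr r)); [right; reflexivity|lra|lra|apply (fexp_dec (267/100) (257/40) (141/20) (3561/10000) r); [lra|lra|pose proof eb124; lra|lra]|intros x Hx; apply (enc_dec (267/100) (277/100) (257/40) (141/20) (622541/1000000) (53379/50000)); [lra|lra|pose proof eb124; lra|pose proof eb145; lra|lra|lra]|apply (fexp_inc (267/100) (622541/1000000) (53379/50000) (2661/625) r); [lra|lra|lra|pose proof eb146; lra|pose proof eb146; lra|lra]]. }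
  }
  }
  unfold HSfacts; repeat split; try lra; assumption.
Qed.

Lemma piece4 : forall r, (277/100) <= r <= (29/10) -> HSfacts r (79/20) (51/10) (61/10) (147/20) (101/100).
Proof.
  intros r Hr.
  assert (B : (431953/50000) <= fr r 2 <= (491921/50000)) by (apply (enc_dec (277/100) (29/10) (2) (2) (431953/50000) (491921/50000)); [lra|lra|pose proof eb147; lra|pose proof eb148; lra|lra|lra]).
  assert (A : (20607/250000) <= fr r (fr r 2) <= (48031/200000)) by (apply (enc_dec (277/100) (29/10) (431953/50000) (491921/50000) (20607/250000) (48031/200000)); [lra|lra|pose proof eb149; lra|pose proof eb150; lra|lra|lra]).
  assert (C : (998497/10000000) <= fr r (fr r (fr r 2)) <= (824403/1000000)) by (apply (enc_inc (277/100) (29/10) (20607/250000) (48031/200000) (998497/10000000) (824403/1000000)); [lra|lra|lra|pose proof eb151; lra|pose proof eb152; lra|lra|lra]).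
  assert (AC : fr r (fr r 2) < fr r (fr r (fr r 2))) by (apply (fr_gt_id (277/100) (20607/250000) (48031/200000)); [lra|lra|lra|pose proof eb153; lra]).
  assert (G1a : (479431/100000) <= fr r (79/20) <= (545991/100000)) by (apply (enc_dec (277/100) (29/10) (79/20) (79/20) (479431/100000) (545991/100000)); [lra|lra|pose proof eb154; lra|pose proof eb155; lra|lra|lra]).
  assert (G1 : (1619/800) <= fr r (fr r (79/20)) <= (43219/12500)) by (apply (enc_dec (277/100) (29/10) (479431/100000) (545991/100000) (1619/800) (43219/12500)); [lra|lra|pose proof eb156; lra|pose proof eb157; lra|lra|lra]).
  assert (G2a : (126533/50000) <= fr r (51/10) <= (1441/500)) by (apply (enc_dec (277/100) (29/10) (51/10) (51/10) (126533/50000) (1441/500)); [lra|lra|pose proof eb158; lra|pose proof eb159; lra|lra|lra]).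
  assert (G2 : (371293/50000) <= fr r (fr r (51/10)) <= (926553/100000)) by (apply (enc_dec (277/100) (29/10) (126533/50000) (1441/500) (371293/50000) (926553/100000)); [lra|lra|pose proof eb160; lra|pose proof eb161; lra|lra|lra]).
  assert (G3a : (66593/50000) <= fr r (61/10) <= (151677/100000)) by (apply (enc_dec (277/100) (29/10) (61/10) (61/10) (66593/50000) (151677/100000)); [lra|lra|pose proof eb162; lra|pose proof eb163; lra|lra|lra]).
  assert (G3 : (747297/100000) <= fr r (fr r (61/10)) <= (917421/100000)) by (apply (enc_inc (277/100) (29/10) (66593/50000) (151677/100000) (747297/100000) (917421/100000)); [lra|lra|lra|pose proof eb164; lra|pose proof eb165; lra|lra|lra]).
  assert (G4a : (110799/200000) <= fr r (147/20) <= (315453/500000)) by (apply (enc_dec (277/100) (29/10) (147/20) (147/20) (110799/200000) (315453/500000)); [lra|lra|pose proof eb166; lra|pose proof eb167; lra|lra|lra]).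
  assert (G4 : (56291/20000) <= fr r (fr r (147/20)) <= (384933/100000)) by (apply (enc_inc (277/100) (29/10) (110799/200000) (315453/500000) (56291/20000) (384933/100000)); [lra|lra|lra|pose proof eb168; lra|pose proof eb169; lra|lra|lra]).
  assert (X0 : mexp (1) (101/100) (79/20) (51/10) (fun x => fr r (fr r x))).
  { apply mexp_join with (c := (2119/500)).
  { apply mexp_weak with (m := (3549/2000) * (30027/50000)); [lra|].
    replace (1) with ((-1) * (-1)) by lra.
    apply (mexp_comp (-1) (-1) (3549/2000) (30027/50000) (79/20) (2119/500) (413787/100000) (545991/100000) (fr r) (fr r)); [right; reflexivity|lra|lra|apply (fexp_dec (277/100) (79/20) (2119/500) (3549/2000) r); [lra|lra|pose proof eb171; lra|lra]|intros x Hx; apply (enc_dec (277/100) (29/10) (79/20) (2119/500) (413787/100000) (545991/100000)); [lra|lra|pose proof eb171; lra|pose proof eb155; lra|lra|lra]|apply (fexp_dec (277/100) (413787/100000) (545991/100000) (30027/50000) r); [lra|lra|pose proof eb156; lra|lra]]. }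
  { apply mexp_join with (c := (181/40)).
  { apply mexp_weak with (m := (16399/10000) * (39093/50000)); [lra|].
    replace (1) with ((-1) * (-1)) by lra.
    apply (mexp_comp (-1) (-1) (16399/10000) (39093/50000) (2119/500) (181/40) (177019/50000) (235617/50000) (fr r) (fr r)); [right; reflexivity|lra|lra|apply (fexp_dec (277/100) (2119/500) (181/40) (16399/10000) r); [lra|lra|pose proof eb170; lra|lra]|intros x Hx; apply (enc_dec (277/100) (29/10) (2119/500) (181/40) (177019/50000) (235617/50000)); [lra|lra|pose proof eb170; lra|pose proof eb172; lra|lra|lra]|apply (fexp_dec (277/100) (177019/50000) (235617/50000) (39093/50000) r); [lra|lra|pose proof eb173; lra|lra]]. }
  { apply mexp_join with (c := (1203/250)).
  { apply mexp_weak with (m := (7413/5000) * (21371/25000)); [lra|].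
    replace (1) with ((-1) * (-1)) by lra.
    apply (mexp_comp (-1) (-1) (7413/5000) (21371/25000) (181/40) (1203/250) (75121/25000) (403189/100000) (fr r) (fr r)); [right; reflexivity|lra|lra|apply (fexp_dec (277/100) (181/40) (1203/250) (7413/5000) r); [lra|lra|pose proof eb176; lra|lra]|intros x Hx; apply (enc_dec (277/100) (29/10) (181/40) (1203/250) (75121/25000) (403189/100000)); [lra|lra|pose proof eb176; lra|pose proof eb174; lra|lra|lra]|apply (fexp_dec (277/100) (75121/25000) (403189/100000) (21371/25000) r); [lra|lra|pose proof eb175; lra|lra]]. }
  { apply mexp_join with (c := (1239/250)).
  { apply mexp_weak with (m := (3801/2500) * (5463/5000)); [lra|].
    replace (1) with ((-1) * (-1)) by lra.
    apply (mexp_comp (-1) (-1) (3801/2500) (5463/5000) (1203/250) (1239/250) (27599/10000) (342201/100000) (fr r) (fr r)); [right; reflexivity|lra|lra|apply (fexp_dec (277/100) (1203/250) (1239/250) (3801/2500) r); [lra|lra|pose proof eb179; lra|lra]|intros x Hx; apply (enc_dec (277/100) (29/10) (1203/250) (1239/250) (27599/10000) (342201/100000)); [lra|lra|pose proof eb179; lra|pose proof eb177; lra|lra|lra]|apply (fexp_dec (277/100) (27599/10000) (342201/100000) (5463/5000) r); [lra|lra|pose proof eb178; lra|lra]]. }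
  { apply mexp_weak with (m := (14253/10000) * (3699/4000)); [lra|].
    replace (1) with ((-1) * (-1)) by lra.
    apply (mexp_comp (-1) (-1) (14253/10000) (3699/4000) (1239/250) (51/10) (126533/50000) (314307/100000) (fr r) (fr r)); [right; reflexivity|lra|lra|apply (fexp_dec (277/100) (1239/250) (51/10) (14253/10000) r); [lra|lra|pose proof eb158; lra|lra]|intros x Hx; apply (enc_dec (277/100) (29/10) (1239/250) (51/10) (126533/50000) (314307/100000)); [lra|lra|pose proof eb158; lra|pose proof eb180; lra|lra|lra]|apply (fexp_dec (277/100) (126533/50000) (314307/100000) (3699/4000) r); [lra|lra|pose proof eb181; lra|lra]]. }
  }
  }
  }
  }
  assert (X1 : mexp (-1) (101/100) (61/10) (147/20) (fun x => fr r (fr r x))).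
  { apply mexp_join with (c := (269/40)).
  { apply mexp_weak with (m := (9583/20000) * (5133/2000)); [lra|].
    replace (-1) with ((-1) * (1)) by lra.
    apply (mexp_comp (-1) (1) (9583/20000) (5133/2000) (61/10) (269/40) (433231/500000) (151677/100000) (fr r) (fr r)); [right; reflexivity|lra|lra|apply (fexp_dec (277/100) (61/10) (269/40) (9583/20000) r); [lra|lra|pose proof eb183; lra|lra]|intros x Hx; apply (enc_dec (277/100) (29/10) (61/10) (269/40) (433231/500000) (151677/100000)); [lra|lra|pose proof eb183; lra|pose proof eb163; lra|lra|lra]|apply (fexp_inc (277/100) (433231/500000) (151677/100000) (5133/2000) r); [lra|lra|lra|pose proof eb182; lra|pose proof eb182; lra|lra]]. }
  { apply mexp_weak with (m := (6517/20000) * (47657/10000)); [lra|].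
    replace (-1) with ((-1) * (1)) by lra.
    apply (mexp_comp (-1) (1) (6517/20000) (47657/10000) (269/40) (147/20) (110799/200000) (986753/1000000) (fr r) (fr r)); [right; reflexivity|lra|lra|apply (fexp_dec (277/100) (269/40) (147/20) (6517/20000) r); [lra|lra|pose proof eb166; lra|lra]|intros x Hx; apply (enc_dec (277/100) (29/10) (269/40) (147/20) (110799/200000) (986753/1000000)); [lra|lra|pose proof eb166; lra|pose proof eb184; lra|lra|lra]|apply (fexp_inc (277/100) (110799/200000) (986753/1000000) (47657/10000) r); [lra|lra|lra|pose proof eb185; lra|pose proof eb185; lra|lra]]. }
  }
  unfold HSfacts; repeat split; try lra; assumption.
Qed.

Lemma all_pieces : forall r, 26/10 <= r <= 29/10 -> exists a0 b0 a1 b1 lam, HSfacts r a0 b0 a1 b1 lam.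
Proof.
  intros r Hr.
  destruct (Rle_dec r (521/200)).
  { exists (19/5), (19/4), (57/10), (133/20), (101/100). apply piece0. lra. }
  destruct (Rle_dec r (131/50)).
  { exists (77/20), (24/5), (57/10), (67/10), (101/100). apply piece1. lra. }
  destruct (Rle_dec r (267/100)).
  { exists (73/20), (49/10), (57/10), (137/20), (101/100). apply piece2. lra. }
  destruct (Rle_dec r (277/100)).
  { exists (19/5), (5), (29/5), (141/20), (101/100). apply piece3. lra. }
  exists (79/20), (51/10), (61/10), (147/20), (101/100). apply piece4. lra.
Qed.

Theorem proposition4p16 :
  forall r : R, 26/10 <= r <= 29/10 ->
    let X := fun x => iter (fr r) 2 2 <= x <= fr r 2 in
    (iter (fr r) 2 2 < iter (fr r) 3 2 /\ iter (fr r) 3 2 < 2 /\ 2 < fr r 2) /\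
    (forall x, X x -> X (fr r x)) /\
    LY_chaotic (fr r) X /\ BC_chaotic (fr r) X /\ D_chaotic (fr r) X.
Proof.
  intros r Hr X.
  destruct (all_pieces r Hr) as [a0 [b0 [a1 [b1 [lam HS]]]]].
  destruct HS as [Ha0 [H01 [H02 [H03 [Hlam [G1 [G2 [G3 [G4 [X0 [X1 [AC [C2 [HA HB]]]]]]]]]]]]]].
  assert (Apos : 0 < fr r (fr r 2)).
  { apply fr_pos. apply fr_pos. lra. }
  assert (B2 : 2 < fr r 2).
  { rewrite fr_2. assert (1 <= exp (r - 2)).
    { rewrite <- exp_0. apply exp_le_mono. lra. } lra. }
  assert (HXinv : forall x, fr r (fr r 2) <= x <= fr r 2 -> fr r (fr r 2) <= fr r x <= fr r 2).
  { intros x Hx. split.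
    - destruct (Rle_dec x 2).
      + apply Rlt_le. eapply Rlt_le_trans; [exact AC|]. apply fr_inc; lra.
      + apply fr_dec; lra.
    - apply fr_max. lra. }
  assert (gc : forall x, continuity_pt (gg (fr r)) x) by (apply gg_cont; apply fr_cont).
  assert (hc : forall y, continuity (fun x => gg (fr r) x - y)).
  { intros y x. apply continuity_pt_minus. apply gc. apply continuity_pt_const. intros a b; reflexivity. }
  assert (cov0 : forall y, a0 <= y <= b1 -> exists x, a0 <= x <= b0 /\ gg (fr r) x = y).
  { intros y Hy. destruct (IVT_cor (fun x => gg (fr r) x - y) a0 b0 (hc y)) as [z [Hz Ez]]; [lra| |].
    - unfold gg. assert (fr r (fr r a0) - y <= 0) by lra. assert (0 <= fr r (fr r b0) - y) by lra. nra.
    - exists z. split; auto. lra. }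
  assert (cov1 : forall y, a0 <= y <= b1 -> exists x, a1 <= x <= b1 /\ gg (fr r) x = y).
  { intros y Hy. destruct (IVT_cor (fun x => gg (fr r) x - y) a1 b1 (hc y)) as [z [Hz Ez]]; [lra| |].
    - unfold gg. assert (0 <= fr r (fr r a1) - y) by lra. assert (fr r (fr r b1) - y <= 0) by lra. nra.
    - exists z. split; auto. lra. }
  assert (exp0 : forall x x', a0 <= x <= b0 -> a0 <= x' <= b0 -> lam * Rabs (x - x') <= Rabs (gg (fr r) x - gg (fr r) x')).
  { intros. apply (mexp_abs 1 lam a0 b0 (fun x => fr r (fr r x))); auto. }
  assert (exp1 : forall x x', a1 <= x <= b1 -> a1 <= x' <= b1 -> lam * Rabs (x - x') <= Rabs (gg (fr r) x - gg (fr r) x')).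
  { intros. apply (mexp_abs (-1) lam a1 b1 (fun x => fr r (fr r x))); auto. }
  assert (HA' : fr r (fr r 2) <= a0) by lra.
  assert (HB' : b1 <= fr r 2) by lra.
  split; [|split].
  - change (fr r (fr r 2) < fr r (fr r (fr r 2)) /\ fr r (fr r (fr r 2)) < 2 /\ 2 < fr r 2). lra.
  - exact HXinv.
  - split; [|split].
    + eapply LY_thm with (a0 := a0) (b0 := b0) (a1 := a1) (b1 := b1) (lam := lam); eauto. apply fr_cont.
    + eapply BC_thm with (a0 := a0) (b0 := b0) (a1 := a1) (b1 := b1) (lam := lam); eauto. apply fr_cont.
    + eapply D_thm with (a0 := a0) (b0 := b0) (a1 := a1) (b1 := b1) (lam := lam); eauto. apply fr_cont.
Qed.
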